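(* In the setting below, two vertices $\rho_\lambda W(D_5)$ and $\rho_{\lambda'}W(D_5)$ ($\lambda,\lambda'\in\Lambda$) of the GKM graph $\mathcal G(EIII)$ are adjacent if and only if $\lambda-\lambda'=\alpha$ for some root $\alpha\in\Phi(E_6)$, and in that case the label of the corresponding edge is $(\alpha)$.
   Context: Identify the dual of the Lie algebra of a maximal torus $T$ of $E_6$ with $\{\sum_{i=1}^8x_ie_i\in\mathbb R^8: x_6=x_7=-x_8\}$ with the standard inner product. The simple roots are $\alpha_1=\frac12(e_1-e_2-e_3-e_4-e_5-e_6-e_7+e_8)$, $\alpha_2=e_1+e_2$, $\alpha_i=e_{i-1}-e_{i-2}$ ($3\le i\le6$), and $\Phi(E_6)=\{\pm(e_i+e_j),\pm(e_i-e_j)\ (1\le i<j\le5)\}\cup\{\pm\frac12(\sum_{k=1}^5\mu_ke_k+e_8-e_7-e_6): \mu_k=\pm1,\ \prod\mu_k=1\}$. $H^*(BT)=H^*(BT;\mathbb Z)$ is the polynomial (symmetric) algebra over $\mathbb Z$ on the lattice $H^2(BT)$ spanned by $t_0=\frac12(e_1+\dots+e_5)-\frac16(e_8-e_7-e_6)$, $t_i=e_i+\frac13(e_8-e_7-e_6)$ ($1\le i\le5$), $x=\frac12(e_1+\dots+e_5-e_6-e_7+e_8)$; $W(E_6)$ acts on it. Let $W(D_5)\subset W(E_6)$ be generated by the reflections of $\alpha_2,\dots,\alpha_6$, let $\bar t=\frac23(e_8-e_7-e_6)$ (fixed by $W(D_5)$), $\Lambda=\{w(\bar t):w\in W(E_6)\}$,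 and for $\lambda\in\Lambda$ fix $\rho_\lambda\in W(E_6)$ with $\rho_\lambda(\bar t)=\lambda$ (so $wW(D_5)\mapsto w(\bar t)$ identifies $W(E_6)/W(D_5)$ with $\Lambda$). The GKM graph $\mathcal G(EIII)$ has vertex set $W(E_6)/W(D_5)$ and, for distinct vertices $vW(D_5)\ne wW(D_5)$ and each positive root $\alpha$ (positive with respect to the simple roots above) with $\sigma_\alpha vW(D_5)=wW(D_5)$, an edge labelled by the ideal $(\alpha)\subset H^*(BT)$; here $\sigma_\alpha$ is the reflection of $\alpha$. *)

(* Defs.v *)
(* Vectors of R^8 are modelled by rational row vectors
   'rV[rat]_8 (all objects in the statement are rational). *)
From mathcomp Require Import all_boot all_order all_algebra.
From mathcomp Require Import mpoly.
Set Implicit Arguments. Unset Strict Implicit. Unset Printing Implicit Defensive.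
Import Order.TTheory GRing.Theory Num.Theory.
Local Open Scope ring_scope.

Notation vec := 'rV[rat]_8.

(* e_i, 1 <= i <= 8 (stored at index i-1) *)
Definition e (i : nat) : vec := \row_(j < 8) (if (j : nat) == i.-1 then 1 else 0).

Definition dot (u v : vec) : rat := \sum_(j < 8) u 0 j * v 0 j.

Definition refl (a v : vec) : vec := v - ((2 * dot v a) / dot a a) *: a.

Definition isRoot (a : vec) : Prop :=
  (exists i j : nat, [/\ (1 <= i)%N, (i < j)%N & (j <= 5)%N] /\
     (a = e i + e j \/ a = - (e i + e j) \/ a = e i - e j \/ a = - (e i - e j)))
  \/
  (exists mu : 'I_5 -> rat,
     (forall k, mu k = 1 \/ mu k = -1) /\ \prod_(k < 5) mu k = 1 /\
     let b := (1/2) *: (\sum_(k < 5) mu k *: e k.+1 + e 8 - e 7 - e 6) in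
     (a = b \/ a = - b)).

(* simple roots alpha_1, ..., alpha_6 (stored at index i-1) *)
Definition alpha1 : vec :=
  (1/2) *: (e 1 - e 2 - e 3 - e 4 - e 5 - e 6 - e 7 + e 8).
Definition simple (i : 'I_6) : vec :=
  match (i : nat) with
  | 0 => alpha1
  | 1 => e 1 + e 2
  | k => e k - e k.-1   (* alpha_{k+1} = e_k - e_{k-1}, 2 <= k <= 5 *)
  end.

Definition isPosRoot (a : vec) : Prop :=
  isRoot a /\ exists c : 'I_6 -> nat, a = \sum_(i < 6) (c i)%:R *: simple i.

Definition endo := vec -> vec.
Definition word_act (s : seq vec) : endo :=
  foldr (fun a f => fun v => refl a (f v)) id s.

Definition inWE6 (w : endo) : Prop :=
  exists s : seq vec, (forall a, a \in s -> isRoot a) /\ forall v, w v = word_act s v.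

Definition inWD5 (w : endo) : Prop :=
  exists s : seq vec,
    (forall a, a \in s -> exists i : 'I_6, (0 < (i : nat))%N /\ a = simple i) /\
    forall v, w v = word_act s v.

Definition sameCoset (v w : endo) : Prop :=
  exists u, inWD5 u /\ forall x, w x = v (u x).

Definition tbar : vec := (2/3) *: (e 8 - e 7 - e 6).

Definition inLambda (l : vec) : Prop := exists w, inWE6 w /\ w tbar = l.

(* GKM graph G(EIII): an edge between the vertices v W(D_5) and w W(D_5)
   for the positive root beta (its label being the ideal (beta)). *)
Definition gkm_edge (v w : endo) (beta : vec) : Prop :=
  ~ sameCoset v w /\ isPosRoot beta /\ sameCoset (fun x => refl beta (v x)) w.

Definition gkm_adjacent (v w : endo) : Prop := exists beta, gkm_edge v w beta.

(* H^*(BT) = Sym_Z(H^2(BT)).  H^2(BT) is the lattice spanned by t_0,...,t_5, x;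
   since t_0 = 3x - (t_1+...+t_5), (t_1,...,t_5,x) is a Z-basis, and we identify
   H^*(BT) with the polynomial ring {mpoly int[6]} on that basis. *)
Definition u0 : vec := e 8 - e 7 - e 6.
Definition t0 : vec := (1/2) *: (e 1 + e 2 + e 3 + e 4 + e 5) - (1/6) *: u0.
Definition t (i : nat) : vec := e i + (1/3) *: u0.
Definition xgen : vec := (1/2) *: (e 1 + e 2 + e 3 + e 4 + e 5 - e 6 - e 7 + e 8).

Definition H2basis (i : 'I_6) : vec :=
  if (i : nat) == 5%N then xgen else t i.+1.

Definition HBT := {mpoly int[6]}.

Definition vec_of (c : 'I_6 -> int) : vec := \sum_(i < 6) (c i)%:~R *: H2basis i.
Definition h2 (c : 'I_6 -> int) : HBT := \sum_(i < 6) (c i)%:MP * 'X_i.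

Definition in_H2 (a : vec) : Prop := exists c, vec_of c = a.

(* the principal ideal (a) of H^*(BT), for a in H^2(BT), as a predicate *)
Definition label (a : vec) : HBT -> Prop :=
  fun p => exists c, vec_of c = a /\ exists r : HBT, p = r * h2 c.

(* Main.v *)
Require Import Defs.
From mathcomp Require Import all_boot all_order all_algebra.
From mathcomp Require Import mpoly.
From mathcomp.zify Require Import ssrZ.
From Stdlib Require Import ZArith Lia.
From mathcomp Require Import ring.
Import Order.TTheory GRing.Theory Num.Theory.

Open Scope Z_scope.
Close Scope Z_scope.
Definition cart (i k : nat) : Z :=
  match i, k with
  | 0,0 | 1,1 | 2,2 | 3,3 | 4,4 | 5,5 => Zpos 2
  | 0,2 | 2,0 | 1,3 | 3,1 | 2,3 | 3,2 | 3,4 | 4,3 | 4,5 | 5,4 => Zneg 1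
  | _,_ => Z0 end.
Open Scope Z_scope.
Definition cnth (v : seq Z) (i : nat) : Z := nth 0 v i.
Definition cdk (v : seq Z) (k : nat) : Z :=
  cnth v 0 * cart 0 k + cnth v 1 * cart 1 k + cnth v 2 * cart 2 k +
  cnth v 3 * cart 3 k + cnth v 4 * cart 4 k + cnth v 5 * cart 5 k.
Definition cdot (u v : seq Z) : Z :=
  cnth u 0 * cdk v 0 + cnth u 1 * cdk v 1 + cnth u 2 * cdk v 2 +
  cnth u 3 * cdk v 3 + cnth u 4 * cdk v 4 + cnth u 5 * cdk v 5.
Definition mk6 {T} (f : nat -> T) : seq T := [:: f 0%nat; f 1%nat; f 2%nat; f 3%nat; f 4%nat; f 5%nat].
Definition stepF (r : seq Z) (F : seq (seq Z)) : seq (seq Z) :=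
  mk6 (fun k => let Fk := nth [::] F k in
        mk6 (fun i => cnth Fk i + - ((cnth r k + cdot Fk r) * cnth r i))).
Definition F0 : seq (seq Z) := mk6 (fun _ => mk6 (fun _ => 0)).
Definition cword (l : seq (seq Z)) := foldr stepF F0 l.
Definition unitv (k : nat) : seq Z := mk6 (fun i => if (i == k)%nat then 1 else 0).
Fixpoint zseq_eqb (u v : seq Z) : bool :=
  match u, v with [::], [::] => true | a :: u', b :: v' => Z.eqb a b && zseq_eqb u' v' | _, _ => false end.
Fixpoint zmat_eqb (u v : seq (seq Z)) : bool :=
  match u, v with [::], [::] => true | a :: u', b :: v' => zseq_eqb a b && zmat_eqb u' v' | _, _ => false end.
Close Scope Z_scope.
Open Scope Z_scope.
Definition RL : seq (seq Z) := [:: [:: 0; 1; 0; 0; 0; 0];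
 [:: 0; -1; 0; 0; 0; 0];
 [:: 0; 0; -1; 0; 0; 0];
 [:: 0; 0; 1; 0; 0; 0];
 [:: 0; 1; 0; 1; 0; 0];
 [:: 0; -1; 0; -1; 0; 0];
 [:: 0; 0; -1; -1; 0; 0];
 [:: 0; 0; 1; 1; 0; 0];
 [:: 0; 1; 0; 1; 1; 0];
 [:: 0; -1; 0; -1; -1; 0];
 [:: 0; 0; -1; -1; -1; 0];
 [:: 0; 0; 1; 1; 1; 0];
 [:: 0; 1; 0; 1; 1; 1];
 [:: 0; -1; 0; -1; -1; -1];
 [:: 0; 0; -1; -1; -1; -1];
 [:: 0; 0; 1; 1; 1; 1];
 [:: 0; 1; 1; 1; 0; 0];
 [:: 0; -1; -1; -1; 0; 0];
 [:: 0; 0; 0; -1; 0; 0];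
 [:: 0; 0; 0; 1; 0; 0];
 [:: 0; 1; 1; 1; 1; 0];
 [:: 0; -1; -1; -1; -1; 0];
 [:: 0; 0; 0; -1; -1; 0];
 [:: 0; 0; 0; 1; 1; 0];
 [:: 0; 1; 1; 1; 1; 1];
 [:: 0; -1; -1; -1; -1; -1];
 [:: 0; 0; 0; -1; -1; -1];
 [:: 0; 0; 0; 1; 1; 1];
 [:: 0; 1; 1; 2; 1; 0];
 [:: 0; -1; -1; -2; -1; 0];
 [:: 0; 0; 0; 0; -1; 0];
 [:: 0; 0; 0; 0; 1; 0];
 [:: 0; 1; 1; 2; 1; 1];
 [:: 0; -1; -1; -2; -1; -1];
 [:: 0; 0; 0; 0; -1; -1];
 [:: 0; 0; 0; 0; 1; 1];
 [:: 0; 1; 1; 2; 2; 1];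
 [:: 0; -1; -1; -2; -2; -1];
 [:: 0; 0; 0; 0; 0; -1];
 [:: 0; 0; 0; 0; 0; 1];
 [:: 1; 2; 2; 3; 2; 1];
 [:: -1; -2; -2; -3; -2; -1];
 [:: 1; 1; 1; 1; 0; 0];
 [:: -1; -1; -1; -1; 0; 0];
 [:: 1; 1; 1; 1; 1; 0];
 [:: -1; -1; -1; -1; -1; 0];
 [:: 1; 1; 1; 1; 1; 1];
 [:: -1; -1; -1; -1; -1; -1];
 [:: 1; 1; 1; 2; 1; 0];
 [:: -1; -1; -1; -2; -1; 0];
 [:: 1; 1; 1; 2; 1; 1];
 [:: -1; -1; -1; -2; -1; -1];
 [:: 1; 1; 1; 2; 2; 1];
 [:: -1; -1; -1; -2; -2; -1];
 [:: 1; 0; 0; 0; 0; 0];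
 [:: -1; 0; 0; 0; 0; 0];
 [:: 1; 1; 2; 2; 1; 0];
 [:: -1; -1; -2; -2; -1; 0];
 [:: 1; 1; 2; 2; 1; 1];
 [:: -1; -1; -2; -2; -1; -1];
 [:: 1; 1; 2; 2; 2; 1];
 [:: -1; -1; -2; -2; -2; -1];
 [:: 1; 0; 1; 0; 0; 0];
 [:: -1; 0; -1; 0; 0; 0];
 [:: 1; 1; 2; 3; 2; 1];
 [:: -1; -1; -2; -3; -2; -1];
 [:: 1; 0; 1; 1; 0; 0];
 [:: -1; 0; -1; -1; 0; 0];
 [:: 1; 0; 1; 1; 1; 0];
 [:: -1; 0; -1; -1; -1; 0];
 [:: 1; 0; 1; 1; 1; 1];
 [:: -1; 0; -1; -1; -1; -1]].
Definition WR : seq (seq (seq Z)) := [:: [:: ];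
 [:: [:: 1; 2; 2; 3; 2; 1]];
 [:: [:: 1; 1; 1; 1; 0; 0]];
 [:: [:: 1; 1; 1; 1; 1; 0]];
 [:: [:: 1; 1; 1; 1; 1; 1]];
 [:: [:: 1; 1; 1; 2; 1; 0]];
 [:: [:: 1; 1; 1; 2; 1; 1]];
 [:: [:: 1; 1; 1; 2; 2; 1]];
 [:: [:: 1; 0; 0; 0; 0; 0]];
 [:: [:: 1; 1; 2; 2; 1; 0]];
 [:: [:: 1; 1; 2; 2; 1; 1]];
 [:: [:: 1; 1; 2; 2; 2; 1]];
 [:: [:: 1; 0; 1; 0; 0; 0]];
 [:: [:: 1; 1; 2; 3; 2; 1]];
 [:: [:: 1; 0; 1; 1; 0; 0]];
 [:: [:: 1; 0; 1; 1; 1; 0]];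
 [:: [:: 1; 0; 1; 1; 1; 1]];
 [:: [:: 1; 0; 0; 0; 0; 0]; [:: 1; 2; 2; 3; 2; 1]];
 [:: [:: 1; 0; 1; 0; 0; 0]; [:: 1; 2; 2; 3; 2; 1]];
 [:: [:: 1; 0; 1; 1; 0; 0]; [:: 1; 2; 2; 3; 2; 1]];
 [:: [:: 1; 0; 1; 1; 1; 0]; [:: 1; 2; 2; 3; 2; 1]];
 [:: [:: 1; 0; 1; 1; 1; 1]; [:: 1; 2; 2; 3; 2; 1]];
 [:: [:: 1; 0; 1; 1; 1; 0]; [:: 1; 1; 1; 1; 0; 0]];
 [:: [:: 1; 0; 1; 1; 1; 1]; [:: 1; 1; 1; 1; 0; 0]];
 [:: [:: 1; 0; 1; 1; 1; 1]; [:: 1; 1; 1; 1; 1; 0]];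
 [:: [:: 1; 0; 1; 1; 1; 1]; [:: 1; 1; 1; 2; 1; 0]];
 [:: [:: 1; 0; 1; 1; 1; 1]; [:: 1; 1; 2; 2; 1; 0]]].
Close Scope Z_scope.
Definition TBL : seq (seq (nat * seq nat)) := [:: [:: (0, [:: 1]); (0, [:: 1]); (0, [:: 2]); (0, [:: 2]); (0, [:: 1; 3; 1]); (0, [:: 1; 3; 1]); (0, [:: 2; 3; 2]); (0, [:: 2; 3; 2]); (0, [:: 1; 3; 4; 3; 1]); (0, [:: 1; 3; 4; 3; 1]); (0, [:: 2; 3; 4; 3; 2]); (0, [:: 2; 3; 4; 3; 2]); (0, [:: 1; 3; 4; 5; 4; 3; 1]); (0, [:: 1; 3; 4; 5; 4; 3; 1]); (0, [:: 2; 3; 4; 5; 4; 3; 2]); (0, [:: 2; 3; 4; 5; 4; 3; 2]); (0, [:: 2; 1; 3; 2; 1]); (0, [:: 2; 1; 3; 2; 1]); (0, [:: 3]); (0, [:: 3]); (0, [:: 2; 1; 3; 4; 3; 2; 1]); (0, [:: 2; 1; 3; 4; 3; 2; 1]); (0, [:: 3; 4; 3]); (0, [:: 3; 4; 3]); (0, [:: 2; 1; 3; 4; 5; 4; 3; 2; 1]); (0, [:: 2; 1; 3; 4; 5; 4; 3; 2; 1]); (0, [:: 3; 4; 5; 4; 3]); (0, [:: 3; 4; 5; 4; 3]); (0, [:: 3; 2; 1; 3; 4; 3; 2; 1; 3]); (0, [:: 3; 2; 1; 3; 4; 3; 2; 1; 3]); (0, [:: 4]); (0, [:: 4]); (0,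 [:: 3; 2; 1; 3; 4; 5; 4; 3; 2; 1; 3]); (0, [:: 3; 2; 1; 3; 4; 5; 4; 3; 2; 1; 3]); (0, [:: 4; 5; 4]); (0, [:: 4; 5; 4]); (0, [:: 4; 3; 2; 1; 3; 4; 5; 4; 3; 2; 1; 3; 4]); (0, [:: 4; 3; 2; 1; 3; 4; 5; 4; 3; 2; 1; 3; 4]); (0, [:: 5]); (0, [:: 5]); (1, [:: ]); (1, [:: ]); (2, [:: ]); (2, [:: ]); (3, [:: ]); (3, [:: ]); (4, [:: ]); (4, [:: ]); (5, [:: ]); (5, [:: ]); (6, [:: ]); (6, [:: ]); (7, [:: ]); (7, [:: ]); (8, [:: ]); (8, [:: ]); (9, [:: ]); (9, [:: ]); (10, [:: ]); (10, [:: ]); (11, [:: ]); (11, [:: ]); (12, [:: ]); (12, [:: ]); (13, [:: ]); (13, [:: ]); (14, [:: ]); (14, [:: ]); (15, [:: ]); (15, [:: ]); (16, [:: ]); (16, [:: ])];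
 [:: (13, [:: 1]); (13, [:: 1]); (1, [:: 2]); (1, [:: 2]); (11, [:: 1; 3; 1]); (11, [:: 1; 3; 1]); (1, [:: 2; 3; 2]); (1, [:: 2; 3; 2]); (10, [:: 1; 3; 4; 3; 1]); (10, [:: 1; 3; 4; 3; 1]); (1, [:: 2; 3; 4; 3; 2]); (1, [:: 2; 3; 4; 3; 2]); (9, [:: 1; 3; 4; 5; 4; 3; 1]); (9, [:: 1; 3; 4; 5; 4; 3; 1]); (1, [:: 2; 3; 4; 5; 4; 3; 2]); (1, [:: 2; 3; 4; 5; 4; 3; 2]); (7, [:: 2; 1; 3; 2; 1]); (7, [:: 2; 1; 3; 2; 1]); (1, [:: 3]); (1, [:: 3]); (6, [:: 2; 1; 3; 4; 3; 2; 1]); (6, [:: 2; 1; 3; 4; 3; 2; 1]); (1, [:: 3; 4; 3]); (1, [:: 3; 4; 3]); (5, [:: 2; 1; 3; 4; 5; 4; 3; 2; 1]); (5, [:: 2; 1; 3; 4; 5; 4; 3; 2; 1]); (1, [:: 3; 4; 5; 4; 3]); (1, [:: 3; 4; 5; 4; 3]); (4, [:: 3; 2; 1; 3; 4; 3; 2; 1; 3]); (4, [:: 3; 2; 1; 3; 4; 3; 2; 1; 3]); (1, [:: 4]); (1, [:: 4]); (3, [:: 3; 2; 1; 3; 4; 5; 4; 3; 2; 1; 3]); (3, [:: 3; 2; 1; 3; 4; 5; 4; 3; 2; 1; 3]); (1, [:: 4; 5; 4]); (1, [:: 4; 5; 4]); (2, [:: 4; 3; 2; 1; 3; 4; 5;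 4; 3; 2; 1; 3; 4]); (2, [:: 4; 3; 2; 1; 3; 4; 5; 4; 3; 2; 1; 3; 4]); (1, [:: 5]); (1, [:: 5]); (0, [:: ]); (0, [:: ]); (1, [:: 4; 3; 2; 1; 3; 4; 5; 4; 3; 2; 1; 3; 4]); (1, [:: 4; 3; 2; 1; 3; 4; 5; 4; 3; 2; 1; 3; 4]); (1, [:: 3; 2; 1; 3; 4; 5; 4; 3; 2; 1; 3]); (1, [:: 3; 2; 1; 3; 4; 5; 4; 3; 2; 1; 3]); (1, [:: 3; 2; 1; 3; 4; 3; 2; 1; 3]); (1, [:: 3; 2; 1; 3; 4; 3; 2; 1; 3]); (1, [:: 2; 1; 3; 4; 5; 4; 3; 2; 1]); (1, [:: 2; 1; 3; 4; 5; 4; 3; 2; 1]); (1, [:: 2; 1; 3; 4; 3; 2; 1]); (1, [:: 2; 1; 3; 4; 3; 2; 1]); (1, [:: 2; 1; 3; 2; 1]); (1, [:: 2; 1; 3; 2; 1]); (17, [:: ]); (17, [:: ]); (1, [:: 1; 3; 4; 5; 4; 3; 1]); (1, [:: 1; 3; 4; 5; 4; 3; 1]); (1, [:: 1; 3; 4; 3; 1]); (1, [:: 1; 3; 4; 3; 1]); (1, [:: 1; 3; 1]); (1, [:: 1; 3; 1]); (18, [:: ]); (18, [:: ]); (1, [:: 1]); (1, [:: 1]); (19, [:: ]); (19, [:: ]); (20, [:: ]); (20, [:: ]); (21, [:: ]); (21, [:: ])];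
 [:: (14, [:: 1]); (14, [:: 1]); (2, [:: 2]); (2, [:: 2]); (12, [:: 1; 3; 1]); (12, [:: 1; 3; 1]); (2, [:: 2; 3; 2]); (2, [:: 2; 3; 2]); (2, [:: 1; 3; 4; 3; 1]); (2, [:: 1; 3; 4; 3; 1]); (9, [:: 2; 3; 4; 3; 2]); (9, [:: 2; 3; 4; 3; 2]); (2, [:: 1; 3; 4; 5; 4; 3; 1]); (2, [:: 1; 3; 4; 5; 4; 3; 1]); (10, [:: 2; 3; 4; 5; 4; 3; 2]); (10, [:: 2; 3; 4; 5; 4; 3; 2]); (8, [:: 2; 1; 3; 2; 1]); (8, [:: 2; 1; 3; 2; 1]); (2, [:: 3]); (2, [:: 3]); (2, [:: 2; 1; 3; 4; 3; 2; 1]); (2, [:: 2; 1; 3; 4; 3; 2; 1]); (5, [:: 3; 4; 3]); (5, [:: 3; 4; 3]); (2, [:: 2; 1; 3; 4; 5; 4; 3; 2; 1]); (2, [:: 2; 1; 3; 4; 5; 4; 3; 2; 1]); (6, [:: 3; 4; 5; 4; 3]); (6, [:: 3; 4; 5; 4; 3]); (2, [:: 3; 2; 1; 3; 4; 3; 2; 1; 3]); (2, [:: 3; 2; 1; 3; 4; 3; 2; 1; 3]); (3, [:: 4]); (3, [:: 4]); (2, [:: 3; 2; 1; 3; 4; 5; 4; 3; 2; 1; 3]); (2, [:: 3; 2; 1; 3; 4; 5; 4; 3; 2; 1; 3]); (4, [:: 4; 5; 4]); (4, [:: 4; 5; 4]); (1, [:: 4; 3; 2; 1; 3; 4; 5;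 4; 3; 2; 1; 3; 4]); (1, [:: 4; 3; 2; 1; 3; 4; 5; 4; 3; 2; 1; 3; 4]); (2, [:: 5]); (2, [:: 5]); (2, [:: 4; 3; 2; 1; 3; 4; 5; 4; 3; 2; 1; 3; 4]); (2, [:: 4; 3; 2; 1; 3; 4; 5; 4; 3; 2; 1; 3; 4]); (0, [:: ]); (0, [:: ]); (2, [:: 4]); (2, [:: 4]); (2, [:: 4; 5; 4]); (2, [:: 4; 5; 4]); (2, [:: 3; 4; 3]); (2, [:: 3; 4; 3]); (2, [:: 3; 4; 5; 4; 3]); (2, [:: 3; 4; 5; 4; 3]); (17, [:: 4; 3; 2; 1; 3; 4; 5; 4; 3; 2; 1; 3; 4; 2; 1; 3; 2; 1]); (17, [:: 4; 3; 2; 1; 3; 4; 5; 4; 3; 2; 1; 3; 4; 2; 1; 3; 2; 1]); (2, [:: 2; 1; 3; 2; 1]); (2, [:: 2; 1; 3; 2; 1]); (2, [:: 2; 3; 4; 3; 2]); (2, [:: 2; 3; 4; 3; 2]); (2, [:: 2; 3; 4; 5; 4; 3; 2]); (2, [:: 2; 3; 4; 5; 4; 3; 2]); (18, [:: 4; 3; 2; 1; 3; 4; 5; 4; 3; 2; 1; 3; 4; 1; 3; 1]); (18, [:: 4; 3; 2; 1; 3; 4; 5; 4; 3; 2; 1; 3; 4; 1; 3; 1]); (2, [:: 1; 3; 1]); (2, [:: 1; 3; 1]); (19, [:: 4; 3; 2; 1; 3; 4; 5; 4; 3; 2; 1; 3; 4; 1]); (19, [:: 4; 3; 2; 1; 3;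 4; 5; 4; 3; 2; 1; 3; 4; 1]); (2, [:: 1]); (2, [:: 1]); (22, [:: ]); (22, [:: ]); (23, [:: ]); (23, [:: ])];
 [:: (15, [:: 1]); (15, [:: 1]); (3, [:: 2]); (3, [:: 2]); (3, [:: 1; 3; 1]); (3, [:: 1; 3; 1]); (9, [:: 2; 3; 2]); (9, [:: 2; 3; 2]); (12, [:: 1; 3; 4; 3; 1]); (12, [:: 1; 3; 4; 3; 1]); (3, [:: 2; 3; 4; 3; 2]); (3, [:: 2; 3; 4; 3; 2]); (3, [:: 1; 3; 4; 5; 4; 3; 1]); (3, [:: 1; 3; 4; 5; 4; 3; 1]); (11, [:: 2; 3; 4; 5; 4; 3; 2]); (11, [:: 2; 3; 4; 5; 4; 3; 2]); (3, [:: 2; 1; 3; 2; 1]); (3, [:: 2; 1; 3; 2; 1]); (5, [:: 3]); (5, [:: 3]); (8, [:: 2; 1; 3; 4; 3; 2; 1]); (8, [:: 2; 1; 3; 4; 3; 2; 1]); (3, [:: 3; 4; 3]); (3, [:: 3; 4; 3]); (3, [:: 2; 1; 3; 4; 5; 4; 3; 2; 1]); (3, [:: 2; 1; 3; 4; 5; 4; 3; 2; 1]); (7, [:: 3; 4; 5; 4; 3]); (7, [:: 3; 4; 5; 4; 3]); (3, [:: 3; 2; 1; 3; 4; 3; 2; 1; 3]); (3, [:: 3; 2; 1; 3; 4; 3; 2; 1; 3]); (2, [:: 4]); (2, [:: 4]); (1, [:: 3; 2; 1; 3; 4; 5; 4; 3; 2; 1; 3]); (1, [:: 3; 2; 1;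 3; 4; 5; 4; 3; 2; 1; 3]); (3, [:: 4; 5; 4]); (3, [:: 4; 5; 4]); (3, [:: 4; 3; 2; 1; 3; 4; 5; 4; 3; 2; 1; 3; 4]); (3, [:: 4; 3; 2; 1; 3; 4; 5; 4; 3; 2; 1; 3; 4]); (4, [:: 5]); (4, [:: 5]); (3, [:: 3; 2; 1; 3; 4; 5; 4; 3; 2; 1; 3]); (3, [:: 3; 2; 1; 3; 4; 5; 4; 3; 2; 1; 3]); (3, [:: 4]); (3, [:: 4]); (0, [:: ]); (0, [:: ]); (3, [:: 5]); (3, [:: 5]); (3, [:: 3]); (3, [:: 3]); (17, [:: 3; 2; 1; 3; 4; 5; 2; 1; 3; 4; 3; 2; 1; 3; 2; 1]); (17, [:: 3; 2; 1; 3; 4; 5; 2; 1; 3; 4; 3; 2; 1; 3; 2; 1]); (3, [:: 3; 4; 5; 4; 3]); (3, [:: 3; 4; 5; 4; 3]); (3, [:: 2; 1; 3; 4; 3; 2; 1]); (3, [:: 2; 1; 3; 4; 3; 2; 1]); (3, [:: 2; 3; 2]); (3, [:: 2; 3; 2]); (18, [:: 3; 2; 1; 3; 4; 5; 2; 3; 4; 3; 2; 1; 3; 1]); (18, [:: 3; 2; 1; 3; 4; 5; 2; 3; 4; 3; 2; 1; 3; 1]); (3, [:: 2; 3; 4; 5; 4; 3; 2]); (3, [:: 2; 3; 4; 5; 4; 3; 2]); (3, [:: 1; 3; 4; 3; 1]); (3, [:: 1; 3; 4; 3; 1]); (20, [:: 3; 2; 1; 3; 4; 5; 4; 3; 2;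 1; 3; 1]); (20, [:: 3; 2; 1; 3; 4; 5; 4; 3; 2; 1; 3; 1]); (22, [:: 4; 1]); (22, [:: 4; 1]); (3, [:: 1]); (3, [:: 1]); (24, [:: ]); (24, [:: ])];
 [:: (16, [:: 1]); (16, [:: 1]); (4, [:: 2]); (4, [:: 2]); (4, [:: 1; 3; 1]); (4, [:: 1; 3; 1]); (10, [:: 2; 3; 2]); (10, [:: 2; 3; 2]); (4, [:: 1; 3; 4; 3; 1]); (4, [:: 1; 3; 4; 3; 1]); (11, [:: 2; 3; 4; 3; 2]); (11, [:: 2; 3; 4; 3; 2]); (12, [:: 1; 3; 4; 5; 4; 3; 1]); (12, [:: 1; 3; 4; 5; 4; 3; 1]); (4, [:: 2; 3; 4; 5; 4; 3; 2]); (4, [:: 2; 3; 4; 5; 4; 3; 2]); (4, [:: 2; 1; 3; 2; 1]); (4, [:: 2; 1; 3; 2; 1]); (6, [:: 3]); (6, [:: 3]); (4, [:: 2; 1; 3; 4; 3; 2; 1]); (4, [:: 2; 1; 3; 4; 3; 2; 1]); (7, [:: 3; 4; 3]); (7, [:: 3; 4; 3]); (8, [:: 2; 1; 3; 4; 5; 4; 3; 2; 1]); (8, [:: 2; 1; 3; 4; 5; 4; 3; 2; 1]); (4, [:: 3; 4; 5; 4; 3]); (4, [:: 3; 4; 5; 4; 3]); (1, [:: 3; 2; 1; 3; 4; 3; 2; 1; 3]); (1, [:: 3; 2; 1; 3; 4; 3; 2; 1; 3]); (4, [:: 4]); (4, [:: 4]); (4, [:: 3; 2; 1; 3; 4; 5;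 4; 3; 2; 1; 3]); (4, [:: 3; 2; 1; 3; 4; 5; 4; 3; 2; 1; 3]); (2, [:: 4; 5; 4]); (2, [:: 4; 5; 4]); (4, [:: 4; 3; 2; 1; 3; 4; 5; 4; 3; 2; 1; 3; 4]); (4, [:: 4; 3; 2; 1; 3; 4; 5; 4; 3; 2; 1; 3; 4]); (3, [:: 5]); (3, [:: 5]); (4, [:: 3; 2; 1; 3; 4; 3; 2; 1; 3]); (4, [:: 3; 2; 1; 3; 4; 3; 2; 1; 3]); (4, [:: 4; 5; 4]); (4, [:: 4; 5; 4]); (4, [:: 5]); (4, [:: 5]); (0, [:: ]); (0, [:: ]); (17, [:: 2; 1; 3; 4; 5; 2; 1; 3; 4; 2; 1; 3; 2; 1]); (17, [:: 2; 1; 3; 4; 5; 2; 1; 3; 4; 2; 1; 3; 2; 1]); (4, [:: 3]); (4, [:: 3]); (4, [:: 3; 4; 3]); (4, [:: 3; 4; 3]); (4, [:: 2; 1; 3; 4; 5; 4; 3; 2; 1]); (4, [:: 2; 1; 3; 4; 5; 4; 3; 2; 1]); (18, [:: 1; 3; 4; 5; 2; 1; 3; 4; 2; 1; 3; 1]); (18, [:: 1; 3; 4; 5; 2; 1; 3; 4; 2; 1; 3; 1]); (4, [:: 2; 3; 2]); (4, [:: 2; 3; 2]); (4, [:: 2; 3; 4; 3; 2]); (4, [:: 2; 3; 4; 3; 2]); (4, [:: 1; 3; 4; 5; 4; 3; 1]); (4, [:: 1; 3; 4; 5; 4; 3; 1]); (21, [:: 3; 2; 1; 3; 4; 3; 2;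 1; 3; 1]); (21, [:: 3; 2; 1; 3; 4; 3; 2; 1; 3; 1]); (23, [:: 4; 5; 4; 1]); (23, [:: 4; 5; 4; 1]); (24, [:: 5; 1]); (24, [:: 5; 1]); (4, [:: 1]); (4, [:: 1])];
 [:: (5, [:: 1]); (5, [:: 1]); (9, [:: 2]); (9, [:: 2]); (15, [:: 1; 3; 1]); (15, [:: 1; 3; 1]); (5, [:: 2; 3; 2]); (5, [:: 2; 3; 2]); (14, [:: 1; 3; 4; 3; 1]); (14, [:: 1; 3; 4; 3; 1]); (5, [:: 2; 3; 4; 3; 2]); (5, [:: 2; 3; 4; 3; 2]); (5, [:: 1; 3; 4; 5; 4; 3; 1]); (5, [:: 1; 3; 4; 5; 4; 3; 1]); (13, [:: 2; 3; 4; 5; 4; 3; 2]); (13, [:: 2; 3; 4; 5; 4; 3; 2]); (5, [:: 2; 1; 3; 2; 1]); (5, [:: 2; 1; 3; 2; 1]); (3, [:: 3]); (3, [:: 3]); (5, [:: 2; 1; 3; 4; 3; 2; 1]); (5, [:: 2; 1; 3; 4; 3; 2; 1]); (2, [:: 3; 4; 3]); (2, [:: 3; 4; 3]); (1, [:: 2; 1; 3; 4; 5; 4; 3; 2; 1]); (1, [:: 2; 1; 3; 4; 5; 4; 3; 2; 1]); (5, [:: 3; 4; 5; 4; 3]); (5, [:: 3; 4; 5; 4; 3]); (8, [:: 3; 2; 1; 3; 4; 3; 2; 1; 3]); (8, [:: 3; 2; 1; 3; 4; 3; 2; 1; 3]); (5, [:: 4]); (5, [:: 4]); (5, [:: 3;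 2; 1; 3; 4; 5; 4; 3; 2; 1; 3]); (5, [:: 3; 2; 1; 3; 4; 5; 4; 3; 2; 1; 3]); (7, [:: 4; 5; 4]); (7, [:: 4; 5; 4]); (5, [:: 4; 3; 2; 1; 3; 4; 5; 4; 3; 2; 1; 3; 4]); (5, [:: 4; 3; 2; 1; 3; 4; 5; 4; 3; 2; 1; 3; 4]); (6, [:: 5]); (6, [:: 5]); (5, [:: 2; 1; 3; 4; 5; 4; 3; 2; 1]); (5, [:: 2; 1; 3; 4; 5; 4; 3; 2; 1]); (5, [:: 3; 4; 3]); (5, [:: 3; 4; 3]); (5, [:: 3]); (5, [:: 3]); (17, [:: 2; 1; 3; 4; 5; 2; 1; 3; 4; 2; 1; 3; 2; 1]); (17, [:: 2; 1; 3; 4; 5; 2; 1; 3; 4; 2; 1; 3; 2; 1]); (0, [:: ]); (0, [:: ]); (5, [:: 5]); (5, [:: 5]); (5, [:: 4; 5; 4]); (5, [:: 4; 5; 4]); (5, [:: 3; 2; 1; 3; 4; 3; 2; 1; 3]); (5, [:: 3; 2; 1; 3; 4; 3; 2; 1; 3]); (5, [:: 2]); (5, [:: 2]); (19, [:: 2; 1; 3; 4; 5; 2; 3; 4; 2; 3; 2; 1]); (19, [:: 2; 1; 3; 4; 5; 2; 3; 4; 2; 3; 2; 1]); (20, [:: 2; 1; 3; 4; 5; 4; 2; 3; 2; 1]); (20, [:: 2; 1; 3; 4; 5; 4; 2; 3; 2; 1]); (22, [:: 3; 4; 1; 3]); (22, [:: 3; 4; 1; 3]); (5, [:: 2; 3;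 4; 5; 4; 3; 2]); (5, [:: 2; 3; 4; 5; 4; 3; 2]); (5, [:: 1; 3; 4; 3; 1]); (5, [:: 1; 3; 4; 3; 1]); (5, [:: 1; 3; 1]); (5, [:: 1; 3; 1]); (25, [:: ]); (25, [:: ])];
 [:: (6, [:: 1]); (6, [:: 1]); (10, [:: 2]); (10, [:: 2]); (16, [:: 1; 3; 1]); (16, [:: 1; 3; 1]); (6, [:: 2; 3; 2]); (6, [:: 2; 3; 2]); (6, [:: 1; 3; 4; 3; 1]); (6, [:: 1; 3; 4; 3; 1]); (13, [:: 2; 3; 4; 3; 2]); (13, [:: 2; 3; 4; 3; 2]); (14, [:: 1; 3; 4; 5; 4; 3; 1]); (14, [:: 1; 3; 4; 5; 4; 3; 1]); (6, [:: 2; 3; 4; 5; 4; 3; 2]); (6, [:: 2; 3; 4; 5; 4; 3; 2]); (6, [:: 2; 1; 3; 2; 1]); (6, [:: 2; 1; 3; 2; 1]); (4, [:: 3]); (4, [:: 3]); (1, [:: 2; 1; 3; 4; 3; 2; 1]); (1, [:: 2; 1; 3; 4; 3; 2; 1]); (6, [:: 3; 4; 3]); (6, [:: 3; 4; 3]); (6, [:: 2; 1; 3; 4; 5; 4; 3; 2; 1]); (6, [:: 2; 1; 3; 4; 5; 4; 3; 2; 1]); (2, [:: 3; 4; 5; 4; 3]); (2, [:: 3; 4; 5; 4; 3]); (6, [:: 3; 2; 1; 3; 4; 3; 2; 1; 3]); (6, [:: 3; 2; 1; 3; 4; 3; 2; 1; 3]); (7, [:: 4]); (7, [:: 4]); (8,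 [:: 3; 2; 1; 3; 4; 5; 4; 3; 2; 1; 3]); (8, [:: 3; 2; 1; 3; 4; 5; 4; 3; 2; 1; 3]); (6, [:: 4; 5; 4]); (6, [:: 4; 5; 4]); (6, [:: 4; 3; 2; 1; 3; 4; 5; 4; 3; 2; 1; 3; 4]); (6, [:: 4; 3; 2; 1; 3; 4; 5; 4; 3; 2; 1; 3; 4]); (5, [:: 5]); (5, [:: 5]); (6, [:: 2; 1; 3; 4; 3; 2; 1]); (6, [:: 2; 1; 3; 4; 3; 2; 1]); (6, [:: 3; 4; 5; 4; 3]); (6, [:: 3; 4; 5; 4; 3]); (17, [:: 3; 2; 1; 3; 4; 5; 2; 1; 3; 4; 3; 2; 1; 3; 2; 1]); (17, [:: 3; 2; 1; 3; 4; 5; 2; 1; 3; 4; 3; 2; 1; 3; 2; 1]); (6, [:: 3]); (6, [:: 3]); (6, [:: 5]); (6, [:: 5]); (0, [:: ]); (0, [:: ]); (6, [:: 4]); (6, [:: 4]); (6, [:: 3; 2; 1; 3; 4; 5; 4; 3; 2; 1; 3]); (6, [:: 3; 2; 1; 3; 4; 5; 4; 3; 2; 1; 3]); (19, [:: 1; 3; 4; 5; 2; 3; 4; 2; 3; 1]); (19, [:: 1; 3; 4; 5; 2; 3; 4; 2; 3; 1]); (6, [:: 2]); (6, [:: 2]); (21, [:: 2; 1; 3; 4; 2; 3; 2; 1]); (21, [:: 2; 1; 3; 4; 2; 3; 2; 1]); (23, [:: 3; 4; 5; 4; 1; 3]); (23, [:: 3; 4; 5; 4; 1; 3]); (6, [::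 2; 3; 4; 3; 2]); (6, [:: 2; 3; 4; 3; 2]); (6, [:: 1; 3; 4; 5; 4; 3; 1]); (6, [:: 1; 3; 4; 5; 4; 3; 1]); (25, [:: 5; 1; 3; 1]); (25, [:: 5; 1; 3; 1]); (6, [:: 1; 3; 1]); (6, [:: 1; 3; 1])];
 [:: (7, [:: 1]); (7, [:: 1]); (11, [:: 2]); (11, [:: 2]); (7, [:: 1; 3; 1]); (7, [:: 1; 3; 1]); (13, [:: 2; 3; 2]); (13, [:: 2; 3; 2]); (16, [:: 1; 3; 4; 3; 1]); (16, [:: 1; 3; 4; 3; 1]); (7, [:: 2; 3; 4; 3; 2]); (7, [:: 2; 3; 4; 3; 2]); (15, [:: 1; 3; 4; 5; 4; 3; 1]); (15, [:: 1; 3; 4; 5; 4; 3; 1]); (7, [:: 2; 3; 4; 5; 4; 3; 2]); (7, [:: 2; 3; 4; 5; 4; 3; 2]); (1, [:: 2; 1; 3; 2; 1]); (1, [:: 2; 1; 3; 2; 1]); (7, [:: 3]); (7, [:: 3]); (7, [:: 2; 1; 3; 4; 3; 2; 1]); (7, [:: 2; 1; 3; 4; 3; 2; 1]); (4, [:: 3; 4; 3]); (4, [:: 3; 4; 3]); (7, [:: 2; 1; 3; 4; 5; 4; 3; 2; 1]); (7, [:: 2; 1; 3; 4; 5; 4; 3; 2; 1]); (3, [:: 3; 4; 5; 4; 3]); (3, [:: 3; 4; 5; 4; 3]); (7, [:: 3; 2; 1; 3; 4; 3; 2; 1; 3]); (7, [:: 3; 2; 1; 3; 4; 3; 2; 1;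 3]); (6, [:: 4]); (6, [:: 4]); (7, [:: 3; 2; 1; 3; 4; 5; 4; 3; 2; 1; 3]); (7, [:: 3; 2; 1; 3; 4; 5; 4; 3; 2; 1; 3]); (5, [:: 4; 5; 4]); (5, [:: 4; 5; 4]); (8, [:: 4; 3; 2; 1; 3; 4; 5; 4; 3; 2; 1; 3; 4]); (8, [:: 4; 3; 2; 1; 3; 4; 5; 4; 3; 2; 1; 3; 4]); (7, [:: 5]); (7, [:: 5]); (7, [:: 2; 1; 3; 2; 1]); (7, [:: 2; 1; 3; 2; 1]); (17, [:: 4; 3; 2; 1; 3; 4; 5; 4; 3; 2; 1; 3; 4; 2; 1; 3; 2; 1]); (17, [:: 4; 3; 2; 1; 3; 4; 5; 4; 3; 2; 1; 3; 4; 2; 1; 3; 2; 1]); (7, [:: 3; 4; 5; 4; 3]); (7, [:: 3; 4; 5; 4; 3]); (7, [:: 3; 4; 3]); (7, [:: 3; 4; 3]); (7, [:: 4; 5; 4]); (7, [:: 4; 5; 4]); (7, [:: 4]); (7, [:: 4]); (0, [:: ]); (0, [:: ]); (7, [:: 4; 3; 2; 1; 3; 4; 5; 4; 3; 2; 1; 3; 4]); (7, [:: 4; 3; 2; 1; 3; 4; 5; 4; 3; 2; 1; 3; 4]); (20, [:: 1; 3; 4; 5; 4; 2; 3; 1]); (20, [:: 1; 3; 4; 5; 4; 2; 3; 1]); (21, [:: 1; 3; 4; 2; 3; 1]); (21, [:: 1; 3; 4; 2; 3; 1]); (7, [:: 2]); (7, [:: 2]); (24, [:: 3; 4; 5; 1;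 3; 4; 1; 3]); (24, [:: 3; 4; 5; 1; 3; 4; 1; 3]); (7, [:: 2; 3; 2]); (7, [:: 2; 3; 2]); (25, [:: 4; 5; 1; 3; 4; 1]); (25, [:: 4; 5; 1; 3; 4; 1]); (7, [:: 1; 3; 4; 5; 4; 3; 1]); (7, [:: 1; 3; 4; 5; 4; 3; 1]); (7, [:: 1; 3; 4; 3; 1]); (7, [:: 1; 3; 4; 3; 1])];
 [:: (8, [:: 1]); (8, [:: 1]); (12, [:: 2]); (12, [:: 2]); (8, [:: 1; 3; 1]); (8, [:: 1; 3; 1]); (14, [:: 2; 3; 2]); (14, [:: 2; 3; 2]); (8, [:: 1; 3; 4; 3; 1]); (8, [:: 1; 3; 4; 3; 1]); (15, [:: 2; 3; 4; 3; 2]); (15, [:: 2; 3; 4; 3; 2]); (8, [:: 1; 3; 4; 5; 4; 3; 1]); (8, [:: 1; 3; 4; 5; 4; 3; 1]); (16, [:: 2; 3; 4; 5; 4; 3; 2]); (16, [:: 2; 3; 4; 5; 4; 3; 2]); (2, [:: 2; 1; 3; 2; 1]); (2, [:: 2; 1; 3; 2; 1]); (8, [:: 3]); (8, [:: 3]); (3, [:: 2; 1; 3; 4; 3; 2; 1]); (3, [:: 2; 1; 3; 4; 3; 2; 1]); (8, [:: 3; 4; 3]); (8, [:: 3; 4; 3]); (4, [:: 2; 1; 3; 4; 5; 4; 3; 2; 1]); (4, [:: 2; 1; 3; 4; 5; 4; 3; 2; 1]); (8, [:: 3; 4; 5; 4; 3]); (8, [:: 3; 4; 5; 4; 3]); (5,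 [:: 3; 2; 1; 3; 4; 3; 2; 1; 3]); (5, [:: 3; 2; 1; 3; 4; 3; 2; 1; 3]); (8, [:: 4]); (8, [:: 4]); (6, [:: 3; 2; 1; 3; 4; 5; 4; 3; 2; 1; 3]); (6, [:: 3; 2; 1; 3; 4; 5; 4; 3; 2; 1; 3]); (8, [:: 4; 5; 4]); (8, [:: 4; 5; 4]); (7, [:: 4; 3; 2; 1; 3; 4; 5; 4; 3; 2; 1; 3; 4]); (7, [:: 4; 3; 2; 1; 3; 4; 5; 4; 3; 2; 1; 3; 4]); (8, [:: 5]); (8, [:: 5]); (17, [:: ]); (17, [:: ]); (8, [:: 2; 1; 3; 2; 1]); (8, [:: 2; 1; 3; 2; 1]); (8, [:: 2; 1; 3; 4; 3; 2; 1]); (8, [:: 2; 1; 3; 4; 3; 2; 1]); (8, [:: 2; 1; 3; 4; 5; 4; 3; 2; 1]); (8, [:: 2; 1; 3; 4; 5; 4; 3; 2; 1]); (8, [:: 3; 2; 1; 3; 4; 3; 2; 1; 3]); (8, [:: 3; 2; 1; 3; 4; 3; 2; 1; 3]); (8, [:: 3; 2; 1; 3; 4; 5; 4; 3; 2; 1; 3]); (8, [:: 3; 2; 1; 3; 4; 5; 4; 3; 2; 1; 3]); (8, [:: 4; 3; 2; 1; 3; 4; 5; 4; 3; 2; 1; 3; 4]); (8, [:: 4; 3; 2; 1; 3; 4; 5; 4; 3; 2; 1; 3; 4]); (0, [:: ]); (0, [:: ]); (22, [:: 2; 3; 4; 1; 3; 2]); (22, [:: 2; 3; 4; 1; 3;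 2]); (23, [:: 2; 3; 4; 5; 4; 1; 3; 2]); (23, [:: 2; 3; 4; 5; 4; 1; 3; 2]); (24, [:: 2; 3; 4; 5; 1; 3; 4; 1; 3; 2]); (24, [:: 2; 3; 4; 5; 1; 3; 4; 1; 3; 2]); (8, [:: 2]); (8, [:: 2]); (25, [:: 2; 3; 4; 5; 2; 1; 3; 4; 2; 1; 3; 2]); (25, [:: 2; 3; 4; 5; 2; 1; 3; 4; 2; 1; 3; 2]); (8, [:: 2; 3; 2]); (8, [:: 2; 3; 2]); (8, [:: 2; 3; 4; 3; 2]); (8, [:: 2; 3; 4; 3; 2]); (8, [:: 2; 3; 4; 5; 4; 3; 2]); (8, [:: 2; 3; 4; 5; 4; 3; 2])];
 [:: (9, [:: 1]); (9, [:: 1]); (5, [:: 2]); (5, [:: 2]); (9, [:: 1; 3; 1]); (9, [:: 1; 3; 1]); (3, [:: 2; 3; 2]); (3, [:: 2; 3; 2]); (9, [:: 1; 3; 4; 3; 1]); (9, [:: 1; 3; 4; 3; 1]); (2, [:: 2; 3; 4; 3; 2]); (2, [:: 2; 3; 4; 3; 2]); (1, [:: 1; 3; 4; 5; 4; 3; 1]); (1, [:: 1; 3; 4; 5; 4; 3; 1]); (9, [:: 2; 3; 4; 5; 4; 3; 2]); (9, [:: 2; 3; 4; 5; 4; 3; 2]); (15, [:: 2; 1; 3; 2; 1]); (15, [:: 2; 1; 3; 2; 1]); (9, [:: 3]); (9, [:: 3]); (14, [:: 2; 1; 3; 4; 3; 2; 1]); (14, [:: 2; 1; 3; 4; 3;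 2; 1]); (9, [:: 3; 4; 3]); (9, [:: 3; 4; 3]); (9, [:: 2; 1; 3; 4; 5; 4; 3; 2; 1]); (9, [:: 2; 1; 3; 4; 5; 4; 3; 2; 1]); (13, [:: 3; 4; 5; 4; 3]); (13, [:: 3; 4; 5; 4; 3]); (12, [:: 3; 2; 1; 3; 4; 3; 2; 1; 3]); (12, [:: 3; 2; 1; 3; 4; 3; 2; 1; 3]); (9, [:: 4]); (9, [:: 4]); (9, [:: 3; 2; 1; 3; 4; 5; 4; 3; 2; 1; 3]); (9, [:: 3; 2; 1; 3; 4; 5; 4; 3; 2; 1; 3]); (11, [:: 4; 5; 4]); (11, [:: 4; 5; 4]); (9, [:: 4; 3; 2; 1; 3; 4; 5; 4; 3; 2; 1; 3; 4]); (9, [:: 4; 3; 2; 1; 3; 4; 5; 4; 3; 2; 1; 3; 4]); (10, [:: 5]); (10, [:: 5]); (9, [:: 1; 3; 4; 5; 4; 3; 1]); (9, [:: 1; 3; 4; 5; 4; 3; 1]); (9, [:: 2; 3; 4; 3; 2]); (9, [:: 2; 3; 4; 3; 2]); (9, [:: 2; 3; 2]); (9, [:: 2; 3; 2]); (18, [:: 1; 3; 4; 5; 2; 1; 3; 4; 2; 1; 3; 1]); (18, [:: 1; 3; 4; 5; 2; 1; 3; 4; 2; 1; 3; 1]); (9, [:: 2]); (9, [:: 2]); (19, [:: 1; 3; 4; 5; 2; 3; 4; 2; 3; 1]); (19, [:: 1; 3; 4; 5; 2; 3; 4; 2; 3; 1]); (20, [:: 1; 3; 4; 5; 4; 2; 3;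 1]); (20, [:: 1; 3; 4; 5; 4; 2; 3; 1]); (22, [:: 2; 3; 4; 1; 3; 2]); (22, [:: 2; 3; 4; 1; 3; 2]); (0, [:: ]); (0, [:: ]); (9, [:: 5]); (9, [:: 5]); (9, [:: 4; 5; 4]); (9, [:: 4; 5; 4]); (9, [:: 3; 2; 1; 3; 4; 3; 2; 1; 3]); (9, [:: 3; 2; 1; 3; 4; 3; 2; 1; 3]); (9, [:: 3; 4; 5; 4; 3]); (9, [:: 3; 4; 5; 4; 3]); (9, [:: 2; 1; 3; 4; 3; 2; 1]); (9, [:: 2; 1; 3; 4; 3; 2; 1]); (9, [:: 2; 1; 3; 2; 1]); (9, [:: 2; 1; 3; 2; 1]); (26, [:: ]); (26, [:: ])];
 [:: (10, [:: 1]); (10, [:: 1]); (6, [:: 2]); (6, [:: 2]); (10, [:: 1; 3; 1]); (10, [:: 1; 3; 1]); (4, [:: 2; 3; 2]); (4, [:: 2; 3; 2]); (1, [:: 1; 3; 4; 3; 1]); (1, [:: 1; 3; 4; 3; 1]); (10, [:: 2; 3; 4; 3; 2]); (10, [:: 2; 3; 4; 3; 2]); (10, [:: 1; 3; 4; 5; 4; 3; 1]); (10, [:: 1; 3; 4; 5; 4; 3; 1]); (2, [:: 2; 3; 4; 5; 4; 3; 2]); (2, [:: 2; 3; 4; 5; 4; 3; 2]); (16, [:: 2; 1; 3; 2; 1]); (16, [:: 2; 1; 3; 2; 1]); (10, [:: 3]); (10, [:: 3]); (10, [:: 2; 1; 3; 4; 3; 2; 1]); (10, [:: 2; 1; 3;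 4; 3; 2; 1]); (13, [:: 3; 4; 3]); (13, [:: 3; 4; 3]); (14, [:: 2; 1; 3; 4; 5; 4; 3; 2; 1]); (14, [:: 2; 1; 3; 4; 5; 4; 3; 2; 1]); (10, [:: 3; 4; 5; 4; 3]); (10, [:: 3; 4; 5; 4; 3]); (10, [:: 3; 2; 1; 3; 4; 3; 2; 1; 3]); (10, [:: 3; 2; 1; 3; 4; 3; 2; 1; 3]); (11, [:: 4]); (11, [:: 4]); (12, [:: 3; 2; 1; 3; 4; 5; 4; 3; 2; 1; 3]); (12, [:: 3; 2; 1; 3; 4; 5; 4; 3; 2; 1; 3]); (10, [:: 4; 5; 4]); (10, [:: 4; 5; 4]); (10, [:: 4; 3; 2; 1; 3; 4; 5; 4; 3; 2; 1; 3; 4]); (10, [:: 4; 3; 2; 1; 3; 4; 5; 4; 3; 2; 1; 3; 4]); (9, [:: 5]); (9, [:: 5]); (10, [:: 1; 3; 4; 3; 1]); (10, [:: 1; 3; 4; 3; 1]); (10, [:: 2; 3; 4; 5; 4; 3; 2]); (10, [:: 2; 3; 4; 5; 4; 3; 2]); (18, [:: 3; 2; 1; 3; 4; 5; 2; 3; 4; 3; 2; 1; 3; 1]); (18, [:: 3; 2; 1; 3; 4; 5; 2; 3; 4; 3; 2; 1; 3; 1]); (10, [:: 2; 3; 2]); (10, [:: 2; 3; 2]); (19, [:: 2; 1; 3; 4; 5; 2; 3; 4; 2; 3; 2; 1]); (19, [:: 2; 1; 3; 4; 5; 2; 3; 4; 2; 3; 2; 1]); (10, [:: 2]); (10, [::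 2]); (21, [:: 1; 3; 4; 2; 3; 1]); (21, [:: 1; 3; 4; 2; 3; 1]); (23, [:: 2; 3; 4; 5; 4; 1; 3; 2]); (23, [:: 2; 3; 4; 5; 4; 1; 3; 2]); (10, [:: 5]); (10, [:: 5]); (0, [:: ]); (0, [:: ]); (10, [:: 4]); (10, [:: 4]); (10, [:: 3; 2; 1; 3; 4; 5; 4; 3; 2; 1; 3]); (10, [:: 3; 2; 1; 3; 4; 5; 4; 3; 2; 1; 3]); (10, [:: 3; 4; 3]); (10, [:: 3; 4; 3]); (10, [:: 2; 1; 3; 4; 5; 4; 3; 2; 1]); (10, [:: 2; 1; 3; 4; 5; 4; 3; 2; 1]); (26, [:: 5; 2; 1; 3; 2; 1]); (26, [:: 5; 2; 1; 3; 2; 1]); (10, [:: 2; 1; 3; 2; 1]); (10, [:: 2; 1; 3; 2; 1])];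
 [:: (11, [:: 1]); (11, [:: 1]); (7, [:: 2]); (7, [:: 2]); (1, [:: 1; 3; 1]); (1, [:: 1; 3; 1]); (11, [:: 2; 3; 2]); (11, [:: 2; 3; 2]); (11, [:: 1; 3; 4; 3; 1]); (11, [:: 1; 3; 4; 3; 1]); (4, [:: 2; 3; 4; 3; 2]); (4, [:: 2; 3; 4; 3; 2]); (11, [:: 1; 3; 4; 5; 4; 3; 1]); (11, [:: 1; 3; 4; 5; 4; 3; 1]); (3, [:: 2; 3; 4; 5; 4; 3; 2]); (3, [:: 2; 3; 4; 5; 4; 3; 2]); (11, [:: 2; 1; 3; 2; 1]); (11, [:: 2; 1; 3; 2; 1]); (13, [:: 3]); (13, [:: 3]); (16, [:: 2; 1; 3; 4; 3; 2; 1]); (16, [:: 2; 1; 3; 4; 3; 2; 1]); (11, [:: 3; 4; 3]); (11, [:: 3; 4; 3]); (15, [:: 2; 1; 3; 4; 5; 4; 3; 2; 1]); (15, [:: 2; 1; 3; 4; 5; 4; 3; 2; 1]); (11, [:: 3; 4; 5; 4; 3]); (11, [:: 3; 4; 5; 4; 3]); (11, [:: 3; 2; 1; 3; 4; 3; 2; 1; 3]); (11, [:: 3; 2; 1; 3; 4; 3; 2; 1; 3]); (10, [:: 4]); (10, [:: 4]); (11, [:: 3; 2; 1; 3; 4; 5; 4; 3; 2; 1; 3]); (11, [:: 3; 2; 1; 3; 4; 5; 4; 3; 2; 1; 3]); (9, [:: 4; 5; 4]); (9, [:: 4; 5; 4]); (12, [:: 4; 3; 2; 1; 3; 4; 5;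 4; 3; 2; 1; 3; 4]); (12, [:: 4; 3; 2; 1; 3; 4; 5; 4; 3; 2; 1; 3; 4]); (11, [:: 5]); (11, [:: 5]); (11, [:: 1; 3; 1]); (11, [:: 1; 3; 1]); (18, [:: 4; 3; 2; 1; 3; 4; 5; 4; 3; 2; 1; 3; 4; 1; 3; 1]); (18, [:: 4; 3; 2; 1; 3; 4; 5; 4; 3; 2; 1; 3; 4; 1; 3; 1]); (11, [:: 2; 3; 4; 5; 4; 3; 2]); (11, [:: 2; 3; 4; 5; 4; 3; 2]); (11, [:: 2; 3; 4; 3; 2]); (11, [:: 2; 3; 4; 3; 2]); (20, [:: 2; 1; 3; 4; 5; 4; 2; 3; 2; 1]); (20, [:: 2; 1; 3; 4; 5; 4; 2; 3; 2; 1]); (21, [:: 2; 1; 3; 4; 2; 3; 2; 1]); (21, [:: 2; 1; 3; 4; 2; 3; 2; 1]); (11, [:: 2]); (11, [:: 2]); (24, [:: 2; 3; 4; 5; 1; 3; 4; 1; 3; 2]); (24, [:: 2; 3; 4; 5; 1; 3; 4; 1; 3; 2]); (11, [:: 4; 5; 4]); (11, [:: 4; 5; 4]); (11, [:: 4]); (11, [:: 4]); (0, [:: ]); (0, [:: ]); (11, [:: 4; 3; 2; 1; 3; 4; 5; 4; 3; 2; 1; 3; 4]); (11, [:: 4; 3; 2; 1; 3; 4; 5; 4; 3; 2; 1; 3; 4]); (11, [:: 3]); (11, [:: 3]); (26, [:: 4; 5; 2; 1; 3; 4; 2; 1]); (26, [:: 4; 5; 2; 1; 3; 4; 2; 1]);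 (11, [:: 2; 1; 3; 4; 5; 4; 3; 2; 1]); (11, [:: 2; 1; 3; 4; 5; 4; 3; 2; 1]); (11, [:: 2; 1; 3; 4; 3; 2; 1]); (11, [:: 2; 1; 3; 4; 3; 2; 1])];
 [:: (12, [:: 1]); (12, [:: 1]); (8, [:: 2]); (8, [:: 2]); (2, [:: 1; 3; 1]); (2, [:: 1; 3; 1]); (12, [:: 2; 3; 2]); (12, [:: 2; 3; 2]); (3, [:: 1; 3; 4; 3; 1]); (3, [:: 1; 3; 4; 3; 1]); (12, [:: 2; 3; 4; 3; 2]); (12, [:: 2; 3; 4; 3; 2]); (4, [:: 1; 3; 4; 5; 4; 3; 1]); (4, [:: 1; 3; 4; 5; 4; 3; 1]); (12, [:: 2; 3; 4; 5; 4; 3; 2]); (12, [:: 2; 3; 4; 5; 4; 3; 2]); (12, [:: 2; 1; 3; 2; 1]); (12, [:: 2; 1; 3; 2; 1]); (14, [:: 3]); (14, [:: 3]); (12, [:: 2; 1; 3; 4; 3; 2; 1]); (12, [:: 2; 1; 3; 4; 3; 2; 1]); (15, [:: 3; 4; 3]); (15, [:: 3; 4; 3]); (12, [:: 2; 1; 3; 4; 5; 4; 3; 2; 1]); (12, [:: 2; 1; 3; 4; 5; 4; 3; 2; 1]); (16, [:: 3; 4; 5; 4; 3]); (16, [:: 3; 4; 5; 4; 3]); (9, [:: 3; 2; 1; 3; 4; 3; 2; 1; 3]); (9, [:: 3; 2; 1; 3; 4; 3; 2; 1; 3]); (12, [:: 4]); (12, [:: 4]); (10, [:: 3; 2; 1;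 3; 4; 5; 4; 3; 2; 1; 3]); (10, [:: 3; 2; 1; 3; 4; 5; 4; 3; 2; 1; 3]); (12, [:: 4; 5; 4]); (12, [:: 4; 5; 4]); (11, [:: 4; 3; 2; 1; 3; 4; 5; 4; 3; 2; 1; 3; 4]); (11, [:: 4; 3; 2; 1; 3; 4; 5; 4; 3; 2; 1; 3; 4]); (12, [:: 5]); (12, [:: 5]); (18, [:: ]); (18, [:: ]); (12, [:: 1; 3; 1]); (12, [:: 1; 3; 1]); (12, [:: 1; 3; 4; 3; 1]); (12, [:: 1; 3; 4; 3; 1]); (12, [:: 1; 3; 4; 5; 4; 3; 1]); (12, [:: 1; 3; 4; 5; 4; 3; 1]); (22, [:: 3; 4; 1; 3]); (22, [:: 3; 4; 1; 3]); (23, [:: 3; 4; 5; 4; 1; 3]); (23, [:: 3; 4; 5; 4; 1; 3]); (24, [:: 3; 4; 5; 1; 3; 4; 1; 3]); (24, [:: 3; 4; 5; 1; 3; 4; 1; 3]); (12, [:: 2]); (12, [:: 2]); (12, [:: 3; 2; 1; 3; 4; 3; 2; 1; 3]); (12, [:: 3; 2; 1; 3; 4; 3; 2; 1; 3]); (12, [:: 3; 2; 1; 3; 4; 5; 4; 3; 2; 1; 3]); (12, [:: 3; 2; 1; 3; 4; 5; 4; 3; 2; 1; 3]); (12, [:: 4; 3; 2; 1; 3; 4; 5; 4; 3; 2; 1; 3; 4]); (12, [:: 4; 3; 2; 1; 3; 4; 5; 4; 3; 2; 1; 3; 4]); (0, [:: ]); (0, [:: ]); (26, [:: 3; 4; 5;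 2; 1; 3; 4; 2; 1; 3]); (26, [:: 3; 4; 5; 2; 1; 3; 4; 2; 1; 3]); (12, [:: 3]); (12, [:: 3]); (12, [:: 3; 4; 3]); (12, [:: 3; 4; 3]); (12, [:: 3; 4; 5; 4; 3]); (12, [:: 3; 4; 5; 4; 3])];
 [:: (1, [:: 1]); (1, [:: 1]); (13, [:: 2]); (13, [:: 2]); (13, [:: 1; 3; 1]); (13, [:: 1; 3; 1]); (7, [:: 2; 3; 2]); (7, [:: 2; 3; 2]); (13, [:: 1; 3; 4; 3; 1]); (13, [:: 1; 3; 4; 3; 1]); (6, [:: 2; 3; 4; 3; 2]); (6, [:: 2; 3; 4; 3; 2]); (13, [:: 1; 3; 4; 5; 4; 3; 1]); (13, [:: 1; 3; 4; 5; 4; 3; 1]); (5, [:: 2; 3; 4; 5; 4; 3; 2]); (5, [:: 2; 3; 4; 5; 4; 3; 2]); (13, [:: 2; 1; 3; 2; 1]); (13, [:: 2; 1; 3; 2; 1]); (11, [:: 3]); (11, [:: 3]); (13, [:: 2; 1; 3; 4; 3; 2; 1]); (13, [:: 2; 1; 3; 4; 3; 2; 1]); (10, [:: 3; 4; 3]); (10, [:: 3; 4; 3]); (13, [:: 2; 1; 3; 4; 5; 4; 3; 2; 1]); (13, [:: 2; 1; 3; 4; 5; 4; 3; 2; 1]); (9, [:: 3; 4; 5; 4; 3]); (9, [:: 3; 4; 5; 4; 3]); (16, [:: 3; 2; 1; 3; 4; 3; 2; 1; 3]); (16, [:: 3; 2; 1; 3; 4; 3; 2; 1; 3]); (13, [::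 4]); (13, [:: 4]); (15, [:: 3; 2; 1; 3; 4; 5; 4; 3; 2; 1; 3]); (15, [:: 3; 2; 1; 3; 4; 5; 4; 3; 2; 1; 3]); (13, [:: 4; 5; 4]); (13, [:: 4; 5; 4]); (14, [:: 4; 3; 2; 1; 3; 4; 5; 4; 3; 2; 1; 3; 4]); (14, [:: 4; 3; 2; 1; 3; 4; 5; 4; 3; 2; 1; 3; 4]); (13, [:: 5]); (13, [:: 5]); (13, [:: 1]); (13, [:: 1]); (19, [:: 4; 3; 2; 1; 3; 4; 5; 4; 3; 2; 1; 3; 4; 1]); (19, [:: 4; 3; 2; 1; 3; 4; 5; 4; 3; 2; 1; 3; 4; 1]); (20, [:: 3; 2; 1; 3; 4; 5; 4; 3; 2; 1; 3; 1]); (20, [:: 3; 2; 1; 3; 4; 5; 4; 3; 2; 1; 3; 1]); (21, [:: 3; 2; 1; 3; 4; 3; 2; 1; 3; 1]); (21, [:: 3; 2; 1; 3; 4; 3; 2; 1; 3; 1]); (13, [:: 2; 3; 4; 5; 4; 3; 2]); (13, [:: 2; 3; 4; 5; 4; 3; 2]); (13, [:: 2; 3; 4; 3; 2]); (13, [:: 2; 3; 4; 3; 2]); (13, [:: 2; 3; 2]); (13, [:: 2; 3; 2]); (25, [:: 2; 3; 4; 5; 2; 1; 3; 4; 2; 1; 3; 2]); (25, [:: 2; 3; 4; 5; 2; 1; 3; 4; 2; 1; 3; 2]); (13, [:: 3; 4; 5; 4; 3]); (13, [:: 3; 4; 5; 4; 3]); (13, [:: 3; 4; 3]); (13, [:: 3;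 4; 3]); (13, [:: 3]); (13, [:: 3]); (26, [:: 3; 4; 5; 2; 1; 3; 4; 2; 1; 3]); (26, [:: 3; 4; 5; 2; 1; 3; 4; 2; 1; 3]); (0, [:: ]); (0, [:: ]); (13, [:: 4; 3; 2; 1; 3; 4; 5; 4; 3; 2; 1; 3; 4]); (13, [:: 4; 3; 2; 1; 3; 4; 5; 4; 3; 2; 1; 3; 4]); (13, [:: 3; 2; 1; 3; 4; 5; 4; 3; 2; 1; 3]); (13, [:: 3; 2; 1; 3; 4; 5; 4; 3; 2; 1; 3]); (13, [:: 3; 2; 1; 3; 4; 3; 2; 1; 3]); (13, [:: 3; 2; 1; 3; 4; 3; 2; 1; 3])];
 [:: (2, [:: 1]); (2, [:: 1]); (14, [:: 2]); (14, [:: 2]); (14, [:: 1; 3; 1]); (14, [:: 1; 3; 1]); (8, [:: 2; 3; 2]); (8, [:: 2; 3; 2]); (5, [:: 1; 3; 4; 3; 1]); (5, [:: 1; 3; 4; 3; 1]); (14, [:: 2; 3; 4; 3; 2]); (14, [:: 2; 3; 4; 3; 2]); (6, [:: 1; 3; 4; 5; 4; 3; 1]); (6, [:: 1; 3; 4; 5; 4; 3; 1]); (14, [:: 2; 3; 4; 5; 4; 3; 2]); (14, [:: 2; 3; 4; 5; 4; 3; 2]); (14, [:: 2; 1; 3; 2; 1]); (14, [:: 2; 1; 3; 2; 1]); (12, [:: 3]); (12, [:: 3]); (9, [:: 2; 1; 3; 4; 3; 2; 1]); (9, [:: 2; 1; 3; 4; 3; 2; 1]); (14, [:: 3; 4;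 3]); (14, [:: 3; 4; 3]); (10, [:: 2; 1; 3; 4; 5; 4; 3; 2; 1]); (10, [:: 2; 1; 3; 4; 5; 4; 3; 2; 1]); (14, [:: 3; 4; 5; 4; 3]); (14, [:: 3; 4; 5; 4; 3]); (14, [:: 3; 2; 1; 3; 4; 3; 2; 1; 3]); (14, [:: 3; 2; 1; 3; 4; 3; 2; 1; 3]); (15, [:: 4]); (15, [:: 4]); (14, [:: 3; 2; 1; 3; 4; 5; 4; 3; 2; 1; 3]); (14, [:: 3; 2; 1; 3; 4; 5; 4; 3; 2; 1; 3]); (16, [:: 4; 5; 4]); (16, [:: 4; 5; 4]); (13, [:: 4; 3; 2; 1; 3; 4; 5; 4; 3; 2; 1; 3; 4]); (13, [:: 4; 3; 2; 1; 3; 4; 5; 4; 3; 2; 1; 3; 4]); (14, [:: 5]); (14, [:: 5]); (19, [:: ]); (19, [:: ]); (14, [:: 1]); (14, [:: 1]); (22, [:: 4; 1]); (22, [:: 4; 1]); (23, [:: 4; 5; 4; 1]); (23, [:: 4; 5; 4; 1]); (14, [:: 1; 3; 4; 3; 1]); (14, [:: 1; 3; 4; 3; 1]); (14, [:: 1; 3; 4; 5; 4; 3; 1]); (14, [:: 1; 3; 4; 5; 4; 3; 1]); (25, [:: 4; 5; 1; 3; 4; 1]); (25, [:: 4; 5; 1; 3; 4; 1]); (14, [:: 2; 3; 2]); (14, [:: 2; 3; 2]); (14, [:: 2; 1; 3; 4; 3; 2; 1]); (14, [:: 2; 1; 3; 4; 3; 2; 1]); (14, [:: 2; 1; 3; 4;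 5; 4; 3; 2; 1]); (14, [:: 2; 1; 3; 4; 5; 4; 3; 2; 1]); (26, [:: 4; 5; 2; 1; 3; 4; 2; 1]); (26, [:: 4; 5; 2; 1; 3; 4; 2; 1]); (14, [:: 3]); (14, [:: 3]); (14, [:: 4; 3; 2; 1; 3; 4; 5; 4; 3; 2; 1; 3; 4]); (14, [:: 4; 3; 2; 1; 3; 4; 5; 4; 3; 2; 1; 3; 4]); (0, [:: ]); (0, [:: ]); (14, [:: 4]); (14, [:: 4]); (14, [:: 4; 5; 4]); (14, [:: 4; 5; 4])];
 [:: (3, [:: 1]); (3, [:: 1]); (15, [:: 2]); (15, [:: 2]); (5, [:: 1; 3; 1]); (5, [:: 1; 3; 1]); (15, [:: 2; 3; 2]); (15, [:: 2; 3; 2]); (15, [:: 1; 3; 4; 3; 1]); (15, [:: 1; 3; 4; 3; 1]); (8, [:: 2; 3; 4; 3; 2]); (8, [:: 2; 3; 4; 3; 2]); (7, [:: 1; 3; 4; 5; 4; 3; 1]); (7, [:: 1; 3; 4; 5; 4; 3; 1]); (15, [:: 2; 3; 4; 5; 4; 3; 2]); (15, [:: 2; 3; 4; 5; 4; 3; 2]); (9, [:: 2; 1; 3; 2; 1]); (9, [:: 2; 1; 3; 2; 1]); (15, [:: 3]); (15, [:: 3]); (15, [:: 2; 1; 3; 4; 3; 2; 1]); (15, [:: 2; 1; 3; 4; 3; 2; 1]); (12, [:: 3; 4; 3]); (12, [:: 3; 4; 3]); (11, [:: 2; 1; 3; 4; 5; 4; 3; 2; 1]); (11, [:: 2; 1;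 3; 4; 5; 4; 3; 2; 1]); (15, [:: 3; 4; 5; 4; 3]); (15, [:: 3; 4; 5; 4; 3]); (15, [:: 3; 2; 1; 3; 4; 3; 2; 1; 3]); (15, [:: 3; 2; 1; 3; 4; 3; 2; 1; 3]); (14, [:: 4]); (14, [:: 4]); (13, [:: 3; 2; 1; 3; 4; 5; 4; 3; 2; 1; 3]); (13, [:: 3; 2; 1; 3; 4; 5; 4; 3; 2; 1; 3]); (15, [:: 4; 5; 4]); (15, [:: 4; 5; 4]); (15, [:: 4; 3; 2; 1; 3; 4; 5; 4; 3; 2; 1; 3; 4]); (15, [:: 4; 3; 2; 1; 3; 4; 5; 4; 3; 2; 1; 3; 4]); (16, [:: 5]); (16, [:: 5]); (20, [:: ]); (20, [:: ]); (22, [:: ]); (22, [:: ]); (15, [:: 1]); (15, [:: 1]); (24, [:: 5; 1]); (24, [:: 5; 1]); (15, [:: 1; 3; 1]); (15, [:: 1; 3; 1]); (25, [:: 5; 1; 3; 1]); (25, [:: 5; 1; 3; 1]); (15, [:: 1; 3; 4; 5; 4; 3; 1]); (15, [:: 1; 3; 4; 5; 4; 3; 1]); (15, [:: 2; 3; 4; 3; 2]); (15, [:: 2; 3; 4; 3; 2]); (15, [:: 2; 1; 3; 2; 1]); (15, [:: 2; 1; 3; 2; 1]); (26, [:: 5; 2; 1; 3; 2; 1]); (26, [:: 5; 2; 1; 3; 2; 1]); (15, [:: 2; 1; 3; 4; 5; 4; 3; 2; 1]); (15, [:: 2; 1; 3; 4; 5; 4; 3; 2; 1]); (15, [:: 3;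 4; 3]); (15, [:: 3; 4; 3]); (15, [:: 3; 2; 1; 3; 4; 5; 4; 3; 2; 1; 3]); (15, [:: 3; 2; 1; 3; 4; 5; 4; 3; 2; 1; 3]); (15, [:: 4]); (15, [:: 4]); (0, [:: ]); (0, [:: ]); (15, [:: 5]); (15, [:: 5])];
 [:: (4, [:: 1]); (4, [:: 1]); (16, [:: 2]); (16, [:: 2]); (6, [:: 1; 3; 1]); (6, [:: 1; 3; 1]); (16, [:: 2; 3; 2]); (16, [:: 2; 3; 2]); (7, [:: 1; 3; 4; 3; 1]); (7, [:: 1; 3; 4; 3; 1]); (16, [:: 2; 3; 4; 3; 2]); (16, [:: 2; 3; 4; 3; 2]); (16, [:: 1; 3; 4; 5; 4; 3; 1]); (16, [:: 1; 3; 4; 5; 4; 3; 1]); (8, [:: 2; 3; 4; 5; 4; 3; 2]); (8, [:: 2; 3; 4; 5; 4; 3; 2]); (10, [:: 2; 1; 3; 2; 1]); (10, [:: 2; 1; 3; 2; 1]); (16, [:: 3]); (16, [:: 3]); (11, [:: 2; 1; 3; 4; 3; 2; 1]); (11, [:: 2; 1; 3; 4; 3; 2; 1]); (16, [:: 3; 4; 3]); (16, [:: 3; 4; 3]); (16, [:: 2; 1; 3; 4; 5; 4; 3; 2; 1]); (16, [:: 2; 1; 3; 4; 5; 4; 3; 2; 1]); (12, [:: 3; 4; 5; 4; 3]); (12, [:: 3; 4; 5; 4; 3]); (13, [:: 3; 2; 1; 3; 4; 3; 2; 1; 3]); (13, [:: 3; 2; 1; 3; 4; 3; 2; 1; 3]);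 (16, [:: 4]); (16, [:: 4]); (16, [:: 3; 2; 1; 3; 4; 5; 4; 3; 2; 1; 3]); (16, [:: 3; 2; 1; 3; 4; 5; 4; 3; 2; 1; 3]); (14, [:: 4; 5; 4]); (14, [:: 4; 5; 4]); (16, [:: 4; 3; 2; 1; 3; 4; 5; 4; 3; 2; 1; 3; 4]); (16, [:: 4; 3; 2; 1; 3; 4; 5; 4; 3; 2; 1; 3; 4]); (15, [:: 5]); (15, [:: 5]); (21, [:: ]); (21, [:: ]); (23, [:: ]); (23, [:: ]); (24, [:: ]); (24, [:: ]); (16, [:: 1]); (16, [:: 1]); (25, [:: ]); (25, [:: ]); (16, [:: 1; 3; 1]); (16, [:: 1; 3; 1]); (16, [:: 1; 3; 4; 3; 1]); (16, [:: 1; 3; 4; 3; 1]); (16, [:: 2; 3; 4; 5; 4; 3; 2]); (16, [:: 2; 3; 4; 5; 4; 3; 2]); (26, [:: ]); (26, [:: ]); (16, [:: 2; 1; 3; 2; 1]); (16, [:: 2; 1; 3; 2; 1]); (16, [:: 2; 1; 3; 4; 3; 2; 1]); (16, [:: 2; 1; 3; 4; 3; 2; 1]); (16, [:: 3; 4; 5; 4; 3]); (16, [:: 3; 4; 5; 4; 3]); (16, [:: 3; 2; 1; 3; 4; 3; 2; 1; 3]); (16, [:: 3; 2; 1; 3; 4; 3; 2; 1; 3]); (16, [:: 4; 5; 4]); (16, [:: 4; 5; 4]); (16, [:: 5]); (16, [:: 5]); (0, [:: ]); (0, [:: ])];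
 [:: (25, [:: 2; 3; 4; 5; 2; 1; 3; 4; 2; 1; 3; 2; 1]); (25, [:: 2; 3; 4; 5; 2; 1; 3; 4; 2; 1; 3; 2; 1]); (18, [:: 2]); (18, [:: 2]); (24, [:: 2; 3; 4; 5; 1; 3; 4; 3; 2; 1; 3; 2; 1]); (24, [:: 2; 3; 4; 5; 1; 3; 4; 3; 2; 1; 3; 2; 1]); (19, [:: 2; 3; 2]); (19, [:: 2; 3; 2]); (23, [:: 2; 3; 4; 5; 4; 3; 2; 1; 3; 4; 2; 3; 1]); (23, [:: 2; 3; 4; 5; 4; 3; 2; 1; 3; 4; 2; 3; 1]); (20, [:: 2; 3; 4; 3; 2]); (20, [:: 2; 3; 4; 3; 2]); (22, [:: 4; 3; 2; 1; 3; 4; 5; 1; 3; 4; 2; 3; 1]); (22, [:: 4; 3; 2; 1; 3; 4; 5; 1; 3; 4; 2; 3; 1]); (21, [:: 2; 3; 4; 5; 4; 3; 2]); (21, [:: 2; 3; 4; 5; 4; 3; 2]); (17, [:: 4; 3; 2; 1; 3; 4; 5; 4; 3; 2; 1; 3; 4]); (17, [:: 4; 3; 2; 1; 3; 4; 5; 4; 3; 2; 1; 3; 4]); (17, [:: 3]); (17, [:: 3]); (17, [:: 3; 2; 1; 3; 4; 5; 4; 3; 2; 1; 3]); (17, [:: 3; 2; 1; 3; 4; 5; 4; 3; 2; 1; 3]); (17, [:: 3; 4; 3]); (17, [:: 3; 4; 3]); (17, [:: 3; 2; 1; 3; 4; 3; 2; 1; 3]); (17, [:: 3; 2; 1; 3;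 4; 3; 2; 1; 3]); (17, [:: 3; 4; 5; 4; 3]); (17, [:: 3; 4; 5; 4; 3]); (17, [:: 2; 1; 3; 4; 5; 4; 3; 2; 1]); (17, [:: 2; 1; 3; 4; 5; 4; 3; 2; 1]); (17, [:: 4]); (17, [:: 4]); (17, [:: 2; 1; 3; 4; 3; 2; 1]); (17, [:: 2; 1; 3; 4; 3; 2; 1]); (17, [:: 4; 5; 4]); (17, [:: 4; 5; 4]); (17, [:: 2; 1; 3; 2; 1]); (17, [:: 2; 1; 3; 2; 1]); (17, [:: 5]); (17, [:: 5]); (8, [:: ]); (8, [:: ]); (7, [:: 4; 3; 2; 1; 3; 4; 5; 4; 3; 2; 1; 3; 4; 2; 1; 3; 2; 1]); (7, [:: 4; 3; 2; 1; 3; 4; 5; 4; 3; 2; 1; 3; 4; 2; 1; 3; 2; 1]); (6, [:: 3; 2; 1; 3; 4; 5; 2; 1; 3; 4; 3; 2; 1; 3; 2; 1]); (6, [:: 3; 2; 1; 3; 4; 5; 2; 1; 3; 4; 3; 2; 1; 3; 2; 1]); (5, [:: 2; 1; 3; 4; 5; 2; 1; 3; 4; 2; 1; 3; 2; 1]); (5, [:: 2; 1; 3; 4; 5; 2; 1; 3; 4; 2; 1; 3; 2; 1]); (4, [:: 2; 1; 3; 4; 5; 2; 1; 3; 4; 2; 1; 3; 2; 1]); (4, [:: 2; 1; 3; 4; 5; 2; 1; 3; 4; 2; 1; 3; 2; 1]); (3, [:: 3; 2; 1; 3; 4; 5; 2; 1; 3; 4; 3; 2; 1; 3; 2; 1]);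 (3, [:: 3; 2; 1; 3; 4; 5; 2; 1; 3; 4; 3; 2; 1; 3; 2; 1]); (2, [:: 4; 3; 2; 1; 3; 4; 5; 4; 3; 2; 1; 3; 4; 2; 1; 3; 2; 1]); (2, [:: 4; 3; 2; 1; 3; 4; 5; 4; 3; 2; 1; 3; 4; 2; 1; 3; 2; 1]); (1, [:: ]); (1, [:: ]); (17, [:: 1; 3; 4; 5; 4; 3; 1]); (17, [:: 1; 3; 4; 5; 4; 3; 1]); (17, [:: 1; 3; 4; 3; 1]); (17, [:: 1; 3; 4; 3; 1]); (17, [:: 1; 3; 1]); (17, [:: 1; 3; 1]); (17, [:: 2]); (17, [:: 2]); (17, [:: 1]); (17, [:: 1]); (17, [:: 2; 3; 2]); (17, [:: 2; 3; 2]); (17, [:: 2; 3; 4; 3; 2]); (17, [:: 2; 3; 4; 3; 2]); (17, [:: 2; 3; 4; 5; 4; 3; 2]); (17, [:: 2; 3; 4; 5; 4; 3; 2])];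
 [:: (26, [:: 3; 4; 5; 2; 1; 3; 4; 2; 1; 3; 1]); (26, [:: 3; 4; 5; 2; 1; 3; 4; 2; 1; 3; 1]); (17, [:: 2]); (17, [:: 2]); (18, [:: 4; 3; 2; 1; 3; 4; 5; 4; 3; 2; 1; 3; 4]); (18, [:: 4; 3; 2; 1; 3; 4; 5; 4; 3; 2; 1; 3; 4]); (18, [:: 2; 3; 2]); (18, [:: 2; 3; 2]); (18, [:: 3; 2; 1; 3; 4; 5; 4; 3; 2; 1; 3]); (18, [:: 3; 2; 1; 3; 4; 5; 4; 3; 2; 1; 3]); (18, [:: 2; 3; 4; 3; 2]); (18, [:: 2; 3; 4; 3; 2]); (18, [:: 3; 2; 1; 3; 4; 3; 2; 1; 3]); (18, [:: 3; 2; 1; 3; 4; 3; 2; 1; 3]); (18, [:: 2; 3; 4; 5; 4; 3; 2]); (18, [:: 2; 3; 4; 5; 4; 3; 2]); (24, [:: 3; 4; 5; 1; 3; 4; 3; 2; 1; 3; 1]); (24, [:: 3; 4; 5; 1; 3; 4; 3; 2; 1; 3; 1]); (19, [:: 3]); (19, [:: 3]); (23, [:: 3; 4; 5; 4; 3; 2; 1; 3; 4; 2; 3; 2; 1]); (23, [:: 3; 4; 5; 4; 3; 2; 1; 3; 4; 2; 3; 2; 1]); (20, [:: 3; 4; 3]); (20, [:: 3; 4; 3]); (22, [:: 4; 3; 2; 1; 3; 4; 5; 3; 4; 2; 3; 2; 1]); (22, [:: 4; 3; 2; 1; 3; 4; 5; 3; 4; 2; 3; 2; 1]); (21, [:: 3;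 4; 5; 4; 3]); (21, [:: 3; 4; 5; 4; 3]); (18, [:: 1; 3; 4; 5; 4; 3; 1]); (18, [:: 1; 3; 4; 5; 4; 3; 1]); (18, [:: 4]); (18, [:: 4]); (18, [:: 1; 3; 4; 3; 1]); (18, [:: 1; 3; 4; 3; 1]); (18, [:: 4; 5; 4]); (18, [:: 4; 5; 4]); (18, [:: 1; 3; 1]); (18, [:: 1; 3; 1]); (18, [:: 5]); (18, [:: 5]); (12, [:: ]); (12, [:: ]); (11, [:: 4; 3; 2; 1; 3; 4; 5; 4; 3; 2; 1; 3; 4; 1; 3; 1]); (11, [:: 4; 3; 2; 1; 3; 4; 5; 4; 3; 2; 1; 3; 4; 1; 3; 1]); (10, [:: 3; 2; 1; 3; 4; 5; 2; 3; 4; 3; 2; 1; 3; 1]); (10, [:: 3; 2; 1; 3; 4; 5; 2; 3; 4; 3; 2; 1; 3; 1]); (9, [:: 1; 3; 4; 5; 2; 1; 3; 4; 2; 1; 3; 1]); (9, [:: 1; 3; 4; 5; 2; 1; 3; 4; 2; 1; 3; 1]); (18, [:: 2; 1; 3; 4; 5; 4; 3; 2; 1]); (18, [:: 2; 1; 3; 4; 5; 4; 3; 2; 1]); (18, [:: 2; 1; 3; 4; 3; 2; 1]); (18, [:: 2; 1; 3; 4; 3; 2; 1]); (18, [:: 2; 1; 3; 2; 1]); (18, [:: 2; 1; 3; 2; 1]); (18, [:: 2]); (18, [:: 2]); (4, [:: 1; 3; 4; 5; 2; 1; 3; 4; 2; 1; 3; 1]); (4, [:: 1; 3; 4; 5;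 2; 1; 3; 4; 2; 1; 3; 1]); (3, [:: 3; 2; 1; 3; 4; 5; 2; 3; 4; 3; 2; 1; 3; 1]); (3, [:: 3; 2; 1; 3; 4; 5; 2; 3; 4; 3; 2; 1; 3; 1]); (2, [:: 4; 3; 2; 1; 3; 4; 5; 4; 3; 2; 1; 3; 4; 1; 3; 1]); (2, [:: 4; 3; 2; 1; 3; 4; 5; 4; 3; 2; 1; 3; 4; 1; 3; 1]); (1, [:: ]); (1, [:: ]); (18, [:: 1]); (18, [:: 1]); (18, [:: 3]); (18, [:: 3]); (18, [:: 3; 4; 3]); (18, [:: 3; 4; 3]); (18, [:: 3; 4; 5; 4; 3]); (18, [:: 3; 4; 5; 4; 3])];
 [:: (19, [:: 4; 3; 2; 1; 3; 4; 5; 4; 3; 2; 1; 3; 4]); (19, [:: 4; 3; 2; 1; 3; 4; 5; 4; 3; 2; 1; 3; 4]); (19, [:: 2]); (19, [:: 2]); (26, [:: 4; 5; 2; 1; 3; 4; 2; 3; 1]); (26, [:: 4; 5; 2; 1; 3; 4; 2; 3; 1]); (17, [:: 2; 3; 2]); (17, [:: 2; 3; 2]); (19, [:: 2; 1; 3; 4; 5; 4; 3; 2; 1]); (19, [:: 2; 1; 3; 4; 5; 4; 3; 2; 1]); (19, [:: 2; 3; 4; 3; 2]); (19, [:: 2; 3; 4; 3; 2]); (19, [:: 2; 1; 3; 4; 3; 2; 1]); (19, [:: 2; 1; 3; 4; 3; 2; 1]); (19, [:: 2; 3; 4; 5; 4; 3; 2]); (19, [:: 2; 3; 4; 5; 4;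 3; 2]); (25, [:: 4; 5; 1; 3; 4; 2; 3; 2; 1]); (25, [:: 4; 5; 1; 3; 4; 2; 3; 2; 1]); (18, [:: 3]); (18, [:: 3]); (19, [:: 1; 3; 4; 5; 4; 3; 1]); (19, [:: 1; 3; 4; 5; 4; 3; 1]); (19, [:: 3; 4; 3]); (19, [:: 3; 4; 3]); (19, [:: 1; 3; 4; 3; 1]); (19, [:: 1; 3; 4; 3; 1]); (19, [:: 3; 4; 5; 4; 3]); (19, [:: 3; 4; 5; 4; 3]); (23, [:: 4; 5; 4; 3; 2; 1; 3; 4; 3; 2; 1; 3; 1]); (23, [:: 4; 5; 4; 3; 2; 1; 3; 4; 3; 2; 1; 3; 1]); (20, [:: 4]); (20, [:: 4]); (22, [:: 4; 3; 2; 1; 3; 4; 5; 4; 3; 2; 1; 3; 1]); (22, [:: 4; 3; 2; 1; 3; 4; 5; 4; 3; 2; 1; 3; 1]); (21, [:: 4; 5; 4]); (21, [:: 4; 5; 4]); (19, [:: 1]); (19, [:: 1]); (19, [:: 5]); (19, [:: 5]); (14, [:: ]); (14, [:: ]); (13, [:: 4; 3; 2; 1; 3; 4; 5; 4; 3; 2; 1; 3; 4; 1]); (13, [:: 4; 3; 2; 1; 3; 4; 5; 4; 3; 2; 1; 3; 4; 1]); (19, [:: 3; 2; 1; 3; 4; 5; 4; 3; 2; 1; 3]); (19, [:: 3; 2; 1; 3; 4; 5; 4; 3; 2; 1; 3]); (19, [:: 3; 2; 1; 3; 4; 3; 2; 1; 3]); (19, [:: 3; 2; 1; 3; 4; 3;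 2; 1; 3]); (10, [:: 2; 1; 3; 4; 5; 2; 3; 4; 2; 3; 2; 1]); (10, [:: 2; 1; 3; 4; 5; 2; 3; 4; 2; 3; 2; 1]); (9, [:: 1; 3; 4; 5; 2; 3; 4; 2; 3; 1]); (9, [:: 1; 3; 4; 5; 2; 3; 4; 2; 3; 1]); (19, [:: 2; 1; 3; 2; 1]); (19, [:: 2; 1; 3; 2; 1]); (19, [:: 2; 3; 2]); (19, [:: 2; 3; 2]); (6, [:: 1; 3; 4; 5; 2; 3; 4; 2; 3; 1]); (6, [:: 1; 3; 4; 5; 2; 3; 4; 2; 3; 1]); (5, [:: 2; 1; 3; 4; 5; 2; 3; 4; 2; 3; 2; 1]); (5, [:: 2; 1; 3; 4; 5; 2; 3; 4; 2; 3; 2; 1]); (19, [:: 1; 3; 1]); (19, [:: 1; 3; 1]); (19, [:: 3]); (19, [:: 3]); (2, [:: 4; 3; 2; 1; 3; 4; 5; 4; 3; 2; 1; 3; 4; 1]); (2, [:: 4; 3; 2; 1; 3; 4; 5; 4; 3; 2; 1; 3; 4; 1]); (1, [:: ]); (1, [:: ]); (19, [:: 4]); (19, [:: 4]); (19, [:: 4; 5; 4]); (19, [:: 4; 5; 4])];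
 [:: (20, [:: 3; 2; 1; 3; 4; 5; 4; 3; 2; 1; 3]); (20, [:: 3; 2; 1; 3; 4; 5; 4; 3; 2; 1; 3]); (20, [:: 2]); (20, [:: 2]); (20, [:: 2; 1; 3; 4; 5; 4; 3; 2; 1]); (20, [:: 2; 1; 3; 4; 5; 4; 3; 2; 1]); (20, [:: 2; 3; 2]); (20, [:: 2; 3; 2]); (26, [:: 5; 1; 3; 4; 2; 3; 1]); (26, [:: 5; 1; 3; 4; 2; 3; 1]); (17, [:: 2; 3; 4; 3; 2]); (17, [:: 2; 3; 4; 3; 2]); (20, [:: 2; 1; 3; 2; 1]); (20, [:: 2; 1; 3; 2; 1]); (20, [:: 2; 3; 4; 5; 4; 3; 2]); (20, [:: 2; 3; 4; 5; 4; 3; 2]); (20, [:: 1; 3; 4; 5; 4; 3; 1]); (20, [:: 1; 3; 4; 5; 4; 3; 1]); (20, [:: 3]); (20, [:: 3]); (25, [:: 5; 2; 1; 3; 4; 2; 3; 2; 1]); (25, [:: 5; 2; 1; 3; 4; 2; 3; 2; 1]); (18, [:: 3; 4; 3]); (18, [:: 3; 4; 3]); (20, [:: 1; 3; 1]); (20, [:: 1; 3; 1]); (20, [:: 3; 4; 5; 4; 3]); (20, [:: 3; 4; 5; 4; 3]); (24, [:: 5; 3; 2; 1; 3; 4; 3; 2; 1; 3; 1]); (24, [:: 5; 3; 2; 1; 3; 4; 3; 2; 1; 3; 1]); (19, [:: 4]); (19, [:: 4]); (20, [:: 1]); (20, [:: 1]); (20, [:: 4; 5; 4]); (20, [:: 4;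 5; 4]); (22, [:: 4; 3; 2; 1; 3; 4; 5; 4; 3; 2; 1; 3; 4]); (22, [:: 4; 3; 2; 1; 3; 4; 5; 4; 3; 2; 1; 3; 4]); (21, [:: 5]); (21, [:: 5]); (15, [:: ]); (15, [:: ]); (20, [:: 4; 3; 2; 1; 3; 4; 5; 4; 3; 2; 1; 3; 4]); (20, [:: 4; 3; 2; 1; 3; 4; 5; 4; 3; 2; 1; 3; 4]); (13, [:: 3; 2; 1; 3; 4; 5; 4; 3; 2; 1; 3; 1]); (13, [:: 3; 2; 1; 3; 4; 5; 4; 3; 2; 1; 3; 1]); (20, [:: 3; 2; 1; 3; 4; 3; 2; 1; 3]); (20, [:: 3; 2; 1; 3; 4; 3; 2; 1; 3]); (11, [:: 2; 1; 3; 4; 5; 4; 2; 3; 2; 1]); (11, [:: 2; 1; 3; 4; 5; 4; 2; 3; 2; 1]); (20, [:: 2; 1; 3; 4; 3; 2; 1]); (20, [:: 2; 1; 3; 4; 3; 2; 1]); (9, [:: 1; 3; 4; 5; 4; 2; 3; 1]); (9, [:: 1; 3; 4; 5; 4; 2; 3; 1]); (20, [:: 2; 3; 4; 3; 2]); (20, [:: 2; 3; 4; 3; 2]); (7, [:: 1; 3; 4; 5; 4; 2; 3; 1]); (7, [:: 1; 3; 4; 5; 4; 2; 3; 1]); (20, [:: 1; 3; 4; 3; 1]); (20, [:: 1; 3; 4; 3; 1]); (5, [:: 2; 1; 3; 4; 5; 4; 2; 3; 2; 1]); (5, [:: 2; 1; 3; 4; 5; 4; 2; 3; 2; 1]); (20,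 [:: 3; 4; 3]); (20, [:: 3; 4; 3]); (3, [:: 3; 2; 1; 3; 4; 5; 4; 3; 2; 1; 3; 1]); (3, [:: 3; 2; 1; 3; 4; 5; 4; 3; 2; 1; 3; 1]); (20, [:: 4]); (20, [:: 4]); (1, [:: ]); (1, [:: ]); (20, [:: 5]); (20, [:: 5])];
 [:: (21, [:: 3; 2; 1; 3; 4; 3; 2; 1; 3]); (21, [:: 3; 2; 1; 3; 4; 3; 2; 1; 3]); (21, [:: 2]); (21, [:: 2]); (21, [:: 2; 1; 3; 4; 3; 2; 1]); (21, [:: 2; 1; 3; 4; 3; 2; 1]); (21, [:: 2; 3; 2]); (21, [:: 2; 3; 2]); (21, [:: 2; 1; 3; 2; 1]); (21, [:: 2; 1; 3; 2; 1]); (21, [:: 2; 3; 4; 3; 2]); (21, [:: 2; 3; 4; 3; 2]); (26, [:: 1; 3; 4; 5; 4; 3; 1]); (26, [:: 1; 3; 4; 5; 4; 3; 1]); (17, [:: 2; 3; 4; 5; 4; 3; 2]); (17, [:: 2; 3; 4; 5; 4; 3; 2]); (21, [:: 1; 3; 4; 3; 1]); (21, [:: 1; 3; 4; 3; 1]); (21, [:: 3]); (21, [:: 3]); (21, [:: 1; 3; 1]); (21, [:: 1; 3; 1]); (21, [:: 3; 4; 3]); (21, [:: 3; 4; 3]); (25, [:: 2; 1; 3; 4; 5; 4; 3; 2; 1]); (25, [:: 2; 1; 3; 4; 5; 4; 3; 2; 1]); (18, [:: 3; 4; 5; 4; 3]); (18, [:: 3; 4; 5; 4; 3]); (21, [::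 1]); (21, [:: 1]); (21, [:: 4]); (21, [:: 4]); (24, [:: 3; 2; 1; 3; 4; 5; 4; 3; 2; 1; 3]); (24, [:: 3; 2; 1; 3; 4; 5; 4; 3; 2; 1; 3]); (19, [:: 4; 5; 4]); (19, [:: 4; 5; 4]); (23, [:: 4; 3; 2; 1; 3; 4; 5; 4; 3; 2; 1; 3; 4]); (23, [:: 4; 3; 2; 1; 3; 4; 5; 4; 3; 2; 1; 3; 4]); (20, [:: 5]); (20, [:: 5]); (16, [:: ]); (16, [:: ]); (21, [:: 4; 3; 2; 1; 3; 4; 5; 4; 3; 2; 1; 3; 4]); (21, [:: 4; 3; 2; 1; 3; 4; 5; 4; 3; 2; 1; 3; 4]); (21, [:: 3; 2; 1; 3; 4; 5; 4; 3; 2; 1; 3]); (21, [:: 3; 2; 1; 3; 4; 5; 4; 3; 2; 1; 3]); (13, [:: 3; 2; 1; 3; 4; 3; 2; 1; 3; 1]); (13, [:: 3; 2; 1; 3; 4; 3; 2; 1; 3; 1]); (21, [:: 2; 1; 3; 4; 5; 4; 3; 2; 1]); (21, [:: 2; 1; 3; 4; 5; 4; 3; 2; 1]); (11, [:: 2; 1; 3; 4; 2; 3; 2; 1]); (11, [:: 2; 1; 3; 4; 2; 3; 2; 1]); (10, [:: 1; 3; 4; 2; 3; 1]); (10, [:: 1; 3; 4; 2; 3; 1]); (21, [:: 2; 3; 4; 5; 4; 3; 2]); (21, [:: 2; 3; 4; 5; 4; 3; 2]); (21, [:: 1; 3; 4; 5; 4; 3; 1]); (21, [:: 1; 3; 4;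 5; 4; 3; 1]); (7, [:: 1; 3; 4; 2; 3; 1]); (7, [:: 1; 3; 4; 2; 3; 1]); (6, [:: 2; 1; 3; 4; 2; 3; 2; 1]); (6, [:: 2; 1; 3; 4; 2; 3; 2; 1]); (21, [:: 3; 4; 5; 4; 3]); (21, [:: 3; 4; 5; 4; 3]); (4, [:: 3; 2; 1; 3; 4; 3; 2; 1; 3; 1]); (4, [:: 3; 2; 1; 3; 4; 3; 2; 1; 3; 1]); (21, [:: 4; 5; 4]); (21, [:: 4; 5; 4]); (21, [:: 5]); (21, [:: 5]); (1, [:: ]); (1, [:: ])];
 [:: (22, [:: 4]); (22, [:: 4]); (22, [:: 2]); (22, [:: 2]); (22, [:: 3; 4; 3]); (22, [:: 3; 4; 3]); (22, [:: 2; 3; 2]); (22, [:: 2; 3; 2]); (22, [:: 1; 3; 4; 3; 1]); (22, [:: 1; 3; 4; 3; 1]); (22, [:: 2; 1; 3; 2; 1]); (22, [:: 2; 1; 3; 2; 1]); (17, [:: 1; 3; 4; 5; 4; 3; 2; 1; 3; 4; 1; 3; 2]); (17, [:: 1; 3; 4; 5; 4; 3; 2; 1; 3; 4; 1; 3; 2]); (26, [:: 2; 3; 4; 5; 1; 3; 2]); (26, [:: 2; 3; 4; 5; 1; 3; 2]); (22, [:: 2; 3; 4; 3; 2]); (22, [:: 2; 3; 4; 3; 2]); (22, [:: 3]); (22, [:: 3]); (22, [:: 2; 1; 3; 4; 3; 2; 1]); (22, [:: 2; 1; 3; 4; 3; 2; 1]); (22, [:: 1; 3; 1]); (22, [:: 1;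 3; 1]); (18, [:: 2; 1; 3; 4; 5; 4; 3; 2; 1; 3; 4; 1; 3]); (18, [:: 2; 1; 3; 4; 5; 4; 3; 2; 1; 3; 4; 1; 3]); (25, [:: 3; 4; 5; 1; 3]); (25, [:: 3; 4; 5; 1; 3]); (22, [:: 3; 2; 1; 3; 4; 3; 2; 1; 3]); (22, [:: 3; 2; 1; 3; 4; 3; 2; 1; 3]); (22, [:: 1]); (22, [:: 1]); (19, [:: 3; 2; 1; 3; 4; 5; 4; 3; 2; 1; 3; 4; 1]); (19, [:: 3; 2; 1; 3; 4; 5; 4; 3; 2; 1; 3; 4; 1]); (24, [:: 4; 5; 1]); (24, [:: 4; 5; 1]); (20, [:: 4; 3; 2; 1; 3; 4; 5; 4; 3; 2; 1; 3; 4]); (20, [:: 4; 3; 2; 1; 3; 4; 5; 4; 3; 2; 1; 3; 4]); (23, [:: 5]); (23, [:: 5]); (22, [:: 4; 3; 2; 1; 3; 4; 5; 4; 3; 2; 1; 3; 4]); (22, [:: 4; 3; 2; 1; 3; 4; 5; 4; 3; 2; 1; 3; 4]); (15, [:: ]); (15, [:: ]); (14, [:: 4; 1]); (14, [:: 4; 1]); (22, [:: 4; 5; 4]); (22, [:: 4; 5; 4]); (12, [:: 3; 4; 1; 3]); (12, [:: 3; 4; 1; 3]); (22, [:: 3; 4; 5; 4; 3]); (22, [:: 3; 4; 5; 4; 3]); (22, [:: 1; 3; 4; 5; 4; 3; 1]); (22, [:: 1; 3; 4; 5; 4; 3; 1]); (9, [:: 2; 3; 4; 1; 3; 2]); (9,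 [:: 2; 3; 4; 1; 3; 2]); (8, [:: 2; 3; 4; 1; 3; 2]); (8, [:: 2; 3; 4; 1; 3; 2]); (22, [:: 2; 3; 4; 5; 4; 3; 2]); (22, [:: 2; 3; 4; 5; 4; 3; 2]); (22, [:: 2; 1; 3; 4; 5; 4; 3; 2; 1]); (22, [:: 2; 1; 3; 4; 5; 4; 3; 2; 1]); (5, [:: 3; 4; 1; 3]); (5, [:: 3; 4; 1; 3]); (22, [:: 3; 2; 1; 3; 4; 5; 4; 3; 2; 1; 3]); (22, [:: 3; 2; 1; 3; 4; 5; 4; 3; 2; 1; 3]); (3, [:: 4; 1]); (3, [:: 4; 1]); (2, [:: ]); (2, [:: ]); (22, [:: 5]); (22, [:: 5])];
 [:: (23, [:: 4; 5; 4]); (23, [:: 4; 5; 4]); (23, [:: 2]); (23, [:: 2]); (23, [:: 3; 4; 5; 4; 3]); (23, [:: 3; 4; 5; 4; 3]); (23, [:: 2; 3; 2]); (23, [:: 2; 3; 2]); (17, [:: 4; 3; 2; 1; 3; 4; 5; 2; 3; 4; 1; 3; 2]); (17, [:: 4; 3; 2; 1; 3; 4; 5; 2; 3; 4; 1; 3; 2]); (26, [:: 2; 3; 4; 3; 2]); (26, [:: 2; 3; 4; 3; 2]); (23, [:: 1; 3; 4; 5; 4; 3; 1]); (23, [:: 1; 3; 4; 5; 4; 3; 1]); (23, [:: 2; 1; 3; 2; 1]); (23, [:: 2; 1; 3; 2; 1]); (23, [:: 2; 3; 4; 5; 4; 3; 2]); (23, [:: 2; 3; 4; 5; 4; 3;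 2]); (23, [:: 3]); (23, [:: 3]); (18, [:: 4; 3; 2; 1; 3; 4; 5; 2; 1; 3; 4; 1; 3]); (18, [:: 4; 3; 2; 1; 3; 4; 5; 2; 1; 3; 4; 1; 3]); (25, [:: 3; 4; 3]); (25, [:: 3; 4; 3]); (23, [:: 2; 1; 3; 4; 5; 4; 3; 2; 1]); (23, [:: 2; 1; 3; 4; 5; 4; 3; 2; 1]); (23, [:: 1; 3; 1]); (23, [:: 1; 3; 1]); (19, [:: 4; 3; 2; 1; 3; 4; 5; 3; 2; 1; 3; 4; 1]); (19, [:: 4; 3; 2; 1; 3; 4; 5; 3; 2; 1; 3; 4; 1]); (24, [:: 4]); (24, [:: 4]); (23, [:: 3; 2; 1; 3; 4; 5; 4; 3; 2; 1; 3]); (23, [:: 3; 2; 1; 3; 4; 5; 4; 3; 2; 1; 3]); (23, [:: 1]); (23, [:: 1]); (21, [:: 4; 3; 2; 1; 3; 4; 5; 4; 3; 2; 1; 3; 4]); (21, [:: 4; 3; 2; 1; 3; 4; 5; 4; 3; 2; 1; 3; 4]); (22, [:: 5]); (22, [:: 5]); (23, [:: 4; 3; 2; 1; 3; 4; 5; 4; 3; 2; 1; 3; 4]); (23, [:: 4; 3; 2; 1; 3; 4; 5; 4; 3; 2; 1; 3; 4]); (16, [:: ]); (16, [:: ]); (23, [:: 4]); (23, [:: 4]); (14, [:: 4; 5; 4; 1]); (14, [:: 4; 5; 4; 1]); (23, [:: 3; 4; 3]); (23, [:: 3; 4; 3]); (12, [:: 3; 4; 5; 4; 1; 3]); (12,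 [:: 3; 4; 5; 4; 1; 3]); (23, [:: 1; 3; 4; 3; 1]); (23, [:: 1; 3; 4; 3; 1]); (10, [:: 2; 3; 4; 5; 4; 1; 3; 2]); (10, [:: 2; 3; 4; 5; 4; 1; 3; 2]); (23, [:: 2; 3; 4; 3; 2]); (23, [:: 2; 3; 4; 3; 2]); (8, [:: 2; 3; 4; 5; 4; 1; 3; 2]); (8, [:: 2; 3; 4; 5; 4; 1; 3; 2]); (23, [:: 2; 1; 3; 4; 3; 2; 1]); (23, [:: 2; 1; 3; 4; 3; 2; 1]); (6, [:: 3; 4; 5; 4; 1; 3]); (6, [:: 3; 4; 5; 4; 1; 3]); (23, [:: 3; 2; 1; 3; 4; 3; 2; 1; 3]); (23, [:: 3; 2; 1; 3; 4; 3; 2; 1; 3]); (4, [:: 4; 5; 4; 1]); (4, [:: 4; 5; 4; 1]); (23, [:: 5]); (23, [:: 5]); (2, [:: ]); (2, [:: ])];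
 [:: (24, [:: 5]); (24, [:: 5]); (24, [:: 2]); (24, [:: 2]); (17, [:: 3; 2; 1; 3; 4; 5; 2; 1; 3; 4; 1; 3; 2]); (17, [:: 3; 2; 1; 3; 4; 5; 2; 1; 3; 4; 1; 3; 2]); (26, [:: 2; 3; 2]); (26, [:: 2; 3; 2]); (24, [:: 3; 4; 5; 4; 3]); (24, [:: 3; 4; 5; 4; 3]); (24, [:: 2; 3; 4; 3; 2]); (24, [:: 2; 3; 4; 3; 2]); (24, [:: 1; 3; 4; 5; 4; 3; 1]); (24, [:: 1; 3; 4; 5; 4; 3; 1]); (24, [:: 2; 1; 3; 4; 3; 2; 1]); (24, [:: 2; 1; 3; 4; 3; 2; 1]); (18, [:: 3; 2; 1; 3; 4; 5; 2; 3; 4; 1; 3]); (18, [:: 3; 2; 1; 3; 4; 5; 2; 3; 4; 1; 3]); (25, [:: 3]); (25, [:: 3]); (24, [:: 2; 3; 4; 5; 4; 3; 2]); (24, [:: 2; 3; 4; 5; 4; 3; 2]); (24, [:: 3; 4; 3]); (24, [:: 3; 4; 3]); (24, [:: 2; 1; 3; 4; 5; 4; 3; 2; 1]); (24, [:: 2; 1; 3; 4; 5; 4; 3; 2; 1]); (24, [:: 1; 3; 4; 3; 1]); (24, [:: 1; 3; 4; 3; 1]); (20, [:: 3; 2; 1; 3; 4; 5; 3; 2; 1; 3; 1]); (20, [:: 3; 2; 1; 3; 4; 5; 3; 2; 1; 3; 1]); (23, [:: 4]); (23, [:: 4]); (21, [:: 3; 2; 1; 3; 4; 5; 4; 3; 2;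 1; 3]); (21, [:: 3; 2; 1; 3; 4; 5; 4; 3; 2; 1; 3]); (22, [:: 5; 4; 1]); (22, [:: 5; 4; 1]); (24, [:: 4; 3; 2; 1; 3; 4; 5; 4; 3; 2; 1; 3; 4]); (24, [:: 4; 3; 2; 1; 3; 4; 5; 4; 3; 2; 1; 3; 4]); (24, [:: 1]); (24, [:: 1]); (24, [:: 3; 2; 1; 3; 4; 5; 4; 3; 2; 1; 3]); (24, [:: 3; 2; 1; 3; 4; 5; 4; 3; 2; 1; 3]); (24, [:: 4]); (24, [:: 4]); (16, [:: ]); (16, [:: ]); (15, [:: 5; 1]); (15, [:: 5; 1]); (24, [:: 3]); (24, [:: 3]); (24, [:: 1; 3; 1]); (24, [:: 1; 3; 1]); (12, [:: 3; 4; 5; 1; 3; 4; 1; 3]); (12, [:: 3; 4; 5; 1; 3; 4; 1; 3]); (11, [:: 2; 3; 4; 5; 1; 3; 4; 1; 3; 2]); (11, [:: 2; 3; 4; 5; 1; 3; 4; 1; 3; 2]); (24, [:: 2; 3; 2]); (24, [:: 2; 3; 2]); (24, [:: 2; 1; 3; 2; 1]); (24, [:: 2; 1; 3; 2; 1]); (8, [:: 2; 3; 4; 5; 1; 3; 4; 1; 3; 2]); (8, [:: 2; 3; 4; 5; 1; 3; 4; 1; 3; 2]); (7, [:: 3; 4; 5; 1; 3; 4; 1; 3]); (7, [:: 3; 4; 5; 1; 3; 4; 1; 3]); (24, [:: 3; 2; 1; 3; 4; 3; 2; 1; 3]); (24, [:: 3; 2; 1; 3; 4; 3; 2; 1; 3]);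 (24, [:: 4; 5; 4]); (24, [:: 4; 5; 4]); (4, [:: 5; 1]); (4, [:: 5; 1]); (3, [:: ]); (3, [:: ])];
 [:: (17, [:: 2; 1; 3; 4; 5; 2; 1; 3; 4; 2; 1; 3; 2]); (17, [:: 2; 1; 3; 4; 5; 2; 1; 3; 4; 2; 1; 3; 2]); (26, [:: 2]); (26, [:: 2]); (25, [:: 5]); (25, [:: 5]); (25, [:: 2; 3; 2]); (25, [:: 2; 3; 2]); (25, [:: 4; 5; 4]); (25, [:: 4; 5; 4]); (25, [:: 2; 3; 4; 3; 2]); (25, [:: 2; 3; 4; 3; 2]); (25, [:: 1; 3; 4; 5; 4; 3; 1]); (25, [:: 1; 3; 4; 5; 4; 3; 1]); (25, [:: 3; 2; 1; 3; 4; 3; 2; 1; 3]); (25, [:: 3; 2; 1; 3; 4; 3; 2; 1; 3]); (19, [:: 2; 1; 3; 4; 5; 2; 3; 4; 1]); (19, [:: 2; 1; 3; 4; 5; 2; 3; 4; 1]); (24, [:: 3]); (24, [:: 3]); (20, [:: 2; 1; 3; 4; 5; 2; 3; 2; 1]); (20, [:: 2; 1; 3; 4; 5; 2; 3; 2; 1]); (23, [:: 3; 4; 3]); (23, [:: 3; 4; 3]); (21, [:: 2; 1; 3; 4; 5; 4; 3; 2; 1]); (21, [:: 2; 1; 3; 4; 5; 4; 3; 2; 1]); (22, [:: 5; 3; 4; 1; 3]); (22, [:: 5; 3; 4; 1; 3]); (25, [:: 2; 3; 4; 5; 4; 3; 2]); (25, [:: 2; 3; 4; 5; 4; 3; 2]);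 (25, [:: 4]); (25, [:: 4]); (25, [:: 3; 2; 1; 3; 4; 5; 4; 3; 2; 1; 3]); (25, [:: 3; 2; 1; 3; 4; 5; 4; 3; 2; 1; 3]); (25, [:: 1; 3; 4; 3; 1]); (25, [:: 1; 3; 4; 3; 1]); (25, [:: 4; 3; 2; 1; 3; 4; 5; 4; 3; 2; 1; 3; 4]); (25, [:: 4; 3; 2; 1; 3; 4; 5; 4; 3; 2; 1; 3; 4]); (25, [:: 1; 3; 1]); (25, [:: 1; 3; 1]); (25, [:: 2; 1; 3; 4; 5; 4; 3; 2; 1]); (25, [:: 2; 1; 3; 4; 5; 4; 3; 2; 1]); (25, [:: 3; 4; 3]); (25, [:: 3; 4; 3]); (25, [:: 3]); (25, [:: 3]); (25, [:: 1]); (25, [:: 1]); (16, [:: ]); (16, [:: ]); (15, [:: 5; 1; 3; 1]); (15, [:: 5; 1; 3; 1]); (14, [:: 4; 5; 1; 3; 4; 1]); (14, [:: 4; 5; 1; 3; 4; 1]); (13, [:: 2; 3; 4; 5; 2; 1; 3; 4; 2; 1; 3; 2]); (13, [:: 2; 3; 4; 5; 2; 1; 3; 4; 2; 1; 3; 2]); (25, [:: 2]); (25, [:: 2]); (25, [:: 2; 1; 3; 2; 1]); (25, [:: 2; 1; 3; 2; 1]); (25, [:: 2; 1; 3; 4; 3; 2; 1]); (25, [:: 2; 1; 3; 4; 3; 2; 1]); (25, [:: 3; 4; 5; 4; 3]); (25, [:: 3; 4; 5; 4; 3]); (8, [:: 2; 3; 4; 5; 2; 1; 3; 4; 2; 1;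 3; 2]); (8, [:: 2; 3; 4; 5; 2; 1; 3; 4; 2; 1; 3; 2]); (7, [:: 4; 5; 1; 3; 4; 1]); (7, [:: 4; 5; 1; 3; 4; 1]); (6, [:: 5; 1; 3; 1]); (6, [:: 5; 1; 3; 1]); (5, [:: ]); (5, [:: ])];
 [:: (18, [:: 1; 3; 4; 5; 2; 1; 3; 4; 2; 1; 3]); (18, [:: 1; 3; 4; 5; 2; 1; 3; 4; 2; 1; 3]); (25, [:: 2]); (25, [:: 2]); (19, [:: 1; 3; 4; 5; 2; 3; 4; 2; 1]); (19, [:: 1; 3; 4; 5; 2; 3; 4; 2; 1]); (24, [:: 2; 3; 2]); (24, [:: 2; 3; 2]); (20, [:: 1; 3; 4; 5; 2; 3; 1]); (20, [:: 1; 3; 4; 5; 2; 3; 1]); (23, [:: 2; 3; 4; 3; 2]); (23, [:: 2; 3; 4; 3; 2]); (21, [:: 1; 3; 4; 5; 4; 3; 1]); (21, [:: 1; 3; 4; 5; 4; 3; 1]); (22, [:: 5; 2; 3; 4; 1; 3; 2]); (22, [:: 5; 2; 3; 4; 1; 3; 2]); (26, [:: 5]); (26, [:: 5]); (26, [:: 3]); (26, [:: 3]); (26, [:: 4; 5; 4]); (26, [:: 4; 5; 4]); (26, [:: 3; 4; 3]); (26, [:: 3; 4; 3]); (26, [:: 2; 1; 3; 4; 5; 4; 3; 2; 1]); (26, [:: 2; 1; 3; 4; 5; 4; 3; 2; 1]); (26, [:: 3; 2; 1; 3; 4; 3; 2; 1; 3]); (26, [:: 3; 2; 1; 3; 4;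 3; 2; 1; 3]); (26, [:: 3; 4; 5; 4; 3]); (26, [:: 3; 4; 5; 4; 3]); (26, [:: 4]); (26, [:: 4]); (26, [:: 3; 2; 1; 3; 4; 5; 4; 3; 2; 1; 3]); (26, [:: 3; 2; 1; 3; 4; 5; 4; 3; 2; 1; 3]); (26, [:: 2; 1; 3; 4; 3; 2; 1]); (26, [:: 2; 1; 3; 4; 3; 2; 1]); (26, [:: 4; 3; 2; 1; 3; 4; 5; 4; 3; 2; 1; 3; 4]); (26, [:: 4; 3; 2; 1; 3; 4; 5; 4; 3; 2; 1; 3; 4]); (26, [:: 2; 1; 3; 2; 1]); (26, [:: 2; 1; 3; 2; 1]); (26, [:: 1; 3; 4; 5; 4; 3; 1]); (26, [:: 1; 3; 4; 5; 4; 3; 1]); (26, [:: 2; 3; 4; 3; 2]); (26, [:: 2; 3; 4; 3; 2]); (26, [:: 2; 3; 2]); (26, [:: 2; 3; 2]); (26, [:: 1]); (26, [:: 1]); (26, [:: 2]); (26, [:: 2]); (26, [:: 1; 3; 1]); (26, [:: 1; 3; 1]); (26, [:: 1; 3; 4; 3; 1]); (26, [:: 1; 3; 4; 3; 1]); (26, [:: 2; 3; 4; 5; 4; 3; 2]); (26, [:: 2; 3; 4; 5; 4; 3; 2]); (16, [:: ]); (16, [:: ]); (15, [:: 5; 2; 1; 3; 2; 1]); (15, [:: 5; 2; 1; 3; 2; 1]); (14, [:: 4; 5; 2; 1; 3; 4; 2; 1]); (14, [:: 4; 5; 2; 1; 3; 4; 2; 1]); (13, [:: 3; 4; 5; 2;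 1; 3; 4; 2; 1; 3]); (13, [:: 3; 4; 5; 2; 1; 3; 4; 2; 1; 3]); (12, [:: 3; 4; 5; 2; 1; 3; 4; 2; 1; 3]); (12, [:: 3; 4; 5; 2; 1; 3; 4; 2; 1; 3]); (11, [:: 4; 5; 2; 1; 3; 4; 2; 1]); (11, [:: 4; 5; 2; 1; 3; 4; 2; 1]); (10, [:: 5; 2; 1; 3; 2; 1]); (10, [:: 5; 2; 1; 3; 2; 1]); (9, [:: ]); (9, [:: ])]].
Open Scope Z_scope.
Definition op (p : nat) : seq Z := nth [::] (cword (nth [::] WR p)) 0.
Definition tent (p ri : nat) : nat * seq nat := nth (0%nat, [::]) (nth [::] TBL p) ri.
Definition check_entry (p ri : nat) : bool :=
  let r := nth [::] RL ri in
  let q := (tent p ri).1 in let u := (tent p ri).2 in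
  let c := cnth r 0 + cdot (op p) r in
  [&& (q < 27)%nat, all (fun k => 0 < k < 6)%nat u,
      zmat_eqb (cword (r :: nth [::] WR p)) (cword (nth [::] WR q ++ map unitv u)),
      Z.eqb c 0 ==> (q == p) & [|| Z.eqb c 0, Z.eqb c 1 | Z.eqb c (-1)]].
Definition check_tbl := all (fun p => all (check_entry p) (iota 0 72)) (iota 0 27).
Definition cdkv (v : seq Z) : seq Z := mk6 (cdk v).
Definition check_c4 := all (fun p => let o := cdkv (op p) in all (fun p' => let o' := cdkv (op p') in
   let d := mk6 (fun k => cnth o k - cnth o' k) in
   all (fun ri => zseq_eqb d (cdkv (nth [::] RL ri)) ==> ((tent p ri).1 == p')) (iota 0 72)) (iota 0 27)) (iota 0 27).
Definition check_roots := all (fun r => [&& Z.eqb (cdot r r) 2, size r == 6%nat &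
   all (fun x => 0 <=? x) r || all (fun x => x <=? 0) r]) RL
  && all (fun w => all (fun r => r \in RL) w) WR && (size WR == 27)%nat && (nth [::] WR 0 == [::]) && (size RL == 72)%nat
  && all (fun k => Z.eqb (cdot (unitv k) (unitv k)) 2) (iota 0 6).
Close Scope Z_scope.
Lemma ok_roots : check_roots. Proof. vm_compute. reflexivity. Qed.
Lemma ok_c4 : check_c4. Proof. vm_compute. reflexivity. Qed.
Lemma ok_tbl : check_tbl. Proof. vm_compute. reflexivity. Qed.

Local Open Scope ring_scope.

Definition zr (z : Z) : rat := (int_of_Z z)%:~R.
Lemma zrD a b : zr (Z.add a b) = zr a + zr b.
Proof. rewrite /zr -intrD -(rmorphD int_of_Z). reflexivity. Qed.
Lemma zrM a b : zr (Z.mul a b) = zr a * zr b.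
Proof. rewrite /zr -intrM -(rmorphM int_of_Z). reflexivity. Qed.
Lemma zrN a : zr (Z.opp a) = - zr a.
Proof. rewrite /zr -intrN -(rmorphN int_of_Z). reflexivity. Qed.
Lemma zr0 : zr Z0 = 0. Proof. by []. Qed.
Lemma zr1 : zr (Zpos 1) = 1. Proof. by []. Qed.
Lemma zr2 : zr (Zpos 2) = 2. Proof. by []. Qed.
Lemma zrm1 : zr (Zneg 1) = -1. Proof. by []. Qed.
Lemma zr_inj a b : zr a = zr b -> a = b.
Proof. move=> /intr_inj H; exact: (can_inj int_of_ZK H). Qed.

Lemma dotC u v : dot u v = dot v u.
Proof. by apply: eq_bigr => j _; rewrite mulrC. Qed.
Lemma dotDl u v w : dot (u + v) w = dot u w + dot v w.
Proof. rewrite /dot -big_split /=; apply: eq_bigr => j _; by rewrite !mxE mulrDl. Qed.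
Lemma dotZl a u w : dot (a *: u) w = a * dot u w.
Proof. rewrite /dot mulr_sumr; apply: eq_bigr => j _; by rewrite !mxE mulrA. Qed.
Lemma dotNl u w : dot (- u) w = - dot u w.
Proof. by rewrite -scaleN1r dotZl mulN1r. Qed.
Lemma dotBl u v w : dot (u - v) w = dot u w - dot v w.
Proof. by rewrite dotDl dotNl. Qed.
Lemma dotDr u v w : dot w (u + v) = dot w u + dot w v.
Proof. by rewrite dotC dotDl !(dotC w). Qed.
Lemma dotZr a u w : dot w (a *: u) = a * dot w u.
Proof. by rewrite dotC dotZl dotC. Qed.
Lemma dotNr u w : dot w (- u) = - dot w u.
Proof. by rewrite dotC dotNl dotC. Qed.
Lemma dot0l w : dot 0 w = 0.
Proof. by rewrite -(scale0r 0) dotZl mul0r. Qed.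

Definition sm_def (k : nat) : vec :=
  match k with 0 => alpha1 | 1 => e 1 + e 2 | n.+2 => e n.+2 - e n.+1 end.
Fact sm_key : unit. Proof. exact tt. Qed.
Definition sm := locked_with sm_key sm_def.
Lemma smE : sm = sm_def. Proof. exact: unlock. Qed.
Lemma simple_sm (i : 'I_6) : simple i = sm i. Proof. by rewrite smE; case: i => [[|[|n]] Hi]. Qed.

Ltac ratc := apply/eqP; vm_compute; reflexivity.

Definition r6 (l : seq Z) : vec := \row_(j < 8) (zr (cnth l j) / 6).
Open Scope Z_scope.
Definition zdot8 (l m : seq Z) : Z :=
  cnth l 0 * cnth m 0 + cnth l 1 * cnth m 1 + cnth l 2 * cnth m 2 + cnth l 3 * cnth m 3 +
  cnth l 4 * cnth m 4 + cnth l 5 * cnth m 5 + cnth l 6 * cnth m 6 + cnth l 7 * cnth m 7.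
Definition smtab (k : nat) : seq Z :=
  match k with
  | 0%nat => [:: 3; -3; -3; -3; -3; -3; -3; 3]
  | 1%nat => [:: 6; 6; 0; 0; 0; 0; 0; 0]
  | 2%nat => [:: -6; 6; 0; 0; 0; 0; 0; 0]
  | 3%nat => [:: 0; -6; 6; 0; 0; 0; 0; 0]
  | 4%nat => [:: 0; 0; -6; 6; 0; 0; 0; 0]
  | _ => [:: 0; 0; 0; -6; 6; 0; 0; 0] end.
Definition tbtab : seq Z := [:: 0; 0; 0; 0; 0; -4; -4; 4].
Close Scope Z_scope.

Lemma dot_r6 l m : dot (r6 l) (r6 m) = zr (zdot8 l m) / 36.
Proof.
rewrite /dot !big_ord_recr big_ord0 /= !mxE /zdot8 !zrD !zrM /=.
by field.
Qed.

Ltac vec6 := apply/rowP; case => [[|[|[|[|[|[|[|[|?]]]]]]]] ?] //=; rewrite !mxE /=; ratc.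

Lemma sm_r6 k : (k < 6)%nat -> sm k = r6 (smtab k).
Proof.
rewrite smE; case: k => [|[|[|[|[|[|k]]]]]] //= _; rewrite /alpha1; vec6.
Qed.
Lemma tbar_r6 : tbar = r6 tbtab.
Proof. rewrite /tbar; vec6. Qed.

Lemma dot_sm i k : (i < 6)%nat -> (k < 6)%nat -> dot (sm i) (sm k) = zr (cart i k).
Proof.
move=> Hi Hk; rewrite !sm_r6 // dot_r6.
case: i Hi => [|[|[|[|[|[|i]]]]]] //; case: k Hk => [|[|[|[|[|[|k]]]]]] //= _ _.
Qed.

Definition tb_d (k : nat) : rat := if k is 0%nat then 1 else 0.
Lemma dot_tb k : (k < 6)%nat -> dot tbar (sm k) = tb_d k.
Proof.
move=> Hk; rewrite sm_r6 // tbar_r6 dot_r6.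
case: k Hk => [|[|[|[|[|[|k]]]]]] //= _.
Qed.

Definition embed_def (v : seq Z) : vec :=
  zr (cnth v 0) *: sm 0 + zr (cnth v 1) *: sm 1 + zr (cnth v 2) *: sm 2 +
  zr (cnth v 3) *: sm 3 + zr (cnth v 4) *: sm 4 + zr (cnth v 5) *: sm 5.
Fact embed_key : unit. Proof. exact tt. Qed.
Definition embed := locked_with embed_key embed_def.
Lemma embedE : embed = embed_def. Proof. exact: unlock. Qed.

Lemma dot_embed_sm v k : (k < 6)%nat -> dot (embed v) (sm k) = zr (cdk v k).
Proof. by move=> Hk; rewrite embedE /embed_def !dotDl !dotZl !dot_sm // /cdk !zrD !zrM. Qed.

Lemma dot_x_embed x v : dot x (embed v) =
  zr (cnth v 0) * dot x (sm 0) + zr (cnth v 1) * dot x (sm 1) + zr (cnth v 2) * dot x (sm 2) +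
  zr (cnth v 3) * dot x (sm 3) + zr (cnth v 4) * dot x (sm 4) + zr (cnth v 5) * dot x (sm 5).
Proof. by rewrite embedE /embed_def !dotDr !dotZr. Qed.

Lemma dot_embed u v : dot (embed u) (embed v) = zr (cdot u v).
Proof.
rewrite dot_x_embed !dot_embed_sm // -!zrM -!zrD; congr zr.
rewrite /cdot /cdk /=; ring.
Qed.

Definition interp (F : seq (seq Z)) (x : vec) : vec :=
  x + (dot x (sm 0) *: embed (nth [::] F 0) + dot x (sm 1) *: embed (nth [::] F 1) +
       dot x (sm 2) *: embed (nth [::] F 2) + dot x (sm 3) *: embed (nth [::] F 3) +
       dot x (sm 4) *: embed (nth [::] F 4) + dot x (sm 5) *: embed (nth [::] F 5)).

Lemma refl_embed r x : cdot r r = Zpos 2 -> refl (embed r) x = x - dot x (embed r) *: embed r.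
Proof.
move=> H; rewrite /refl dot_embed H zr2; congr (_ - _ *: _); by field.
Qed.

Lemma embed_lin (F r : seq Z) (m : Z) :
  embed (mk6 (fun i => cnth F i + - (m * cnth r i))%Z) = embed F - zr m *: embed r.
Proof.
rewrite embedE /embed_def /= !zrD !zrN !zrM.
move: (sm 0) (sm 1) (sm 2) (sm 3) (sm 4) (sm 5) => s0 s1 s2 s3 s4 s5.
apply/rowP => j; rewrite !mxE; ring.
Qed.

Lemma step_ok r F x : cdot r r = Zpos 2 -> refl (embed r) (interp F x) = interp (stepF r F) x.
Proof.
move=> H; rewrite refl_embed // /interp /stepF /=.
rewrite !embed_lin !dotDl !dotZl !dot_embed dot_x_embed !zrD.
move: (embed r) (embed (nth [::] F 0)) (embed (nth [::] F 1)) (embed (nth [::] F 2))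
  (embed (nth [::] F 3)) (embed (nth [::] F 4)) (embed (nth [::] F 5)) => R E0 E1 E2 E3 E4 E5.
move: (dot x (sm 0)) (dot x (sm 1)) (dot x (sm 2)) (dot x (sm 3)) (dot x (sm 4)) (dot x (sm 5))
  => d0 d1 d2 d3 d4 d5.
apply/rowP => j; rewrite !mxE; ring.
Qed.

Definition normed (r : seq Z) := Z.eqb (cdot r r) (Zpos 2).

Lemma embed0 : embed (mk6 (fun _ => Z0)) = 0.
Proof. by rewrite embedE /embed_def /= !zr0 !scale0r !addr0. Qed.

Lemma interp0 x : interp F0 x = x.
Proof. by rewrite /interp /F0 /= embed0 !scaler0 !addr0. Qed.

Lemma word_interp l x : all normed l -> word_act (map embed l) x = interp (cword l) x.
Proof.
elim: l => [|r l IH] /=; first by rewrite interp0.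
by move/andP=> [/Z.eqb_eq Hr Hl]; rewrite IH // step_ok.
Qed.

Lemma word_act_cat s1 s2 x : word_act (s1 ++ s2) x = word_act s1 (word_act s2 x).
Proof. by elim: s1 => //= a s IH; rewrite IH. Qed.

Lemma embed_unit k : (0 < k < 6)%nat -> embed (unitv k) = sm k.
Proof.
rewrite embedE /embed_def.
by case: k => [|[|[|[|[|[|k]]]]]] //= _; rewrite ?zr0 ?zr1 ?scale0r ?scale1r ?add0r ?addr0.
Qed.

Lemma unit_normed k : (k < 6)%nat -> normed (unitv k).
Proof. by case: k => [|[|[|[|[|[|k]]]]]]. Qed.

Lemma interp_tbar F : interp F tbar = tbar + embed (nth [::] F 0).
Proof. by rewrite /interp !dot_tb //= scale1r !scale0r !addr0. Qed.

Lemma refl_sm_tbar k : (0 < k < 6)%nat -> refl (sm k) tbar = tbar.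
Proof.
move=> /andP[H0 H6]; rewrite /refl dot_tb //.
by case: k H0 H6 => [|k] //= _ _; rewrite mulr0 mul0r scale0r subr0.
Qed.

Definition d5ok (u : seq nat) := all (fun k => (0 < k < 6)%nat) u.

Lemma word_d5_tbar u : d5ok u -> word_act (map sm u) tbar = tbar.
Proof.
elim: u => //= k u IH /andP[Hk Hu]; by rewrite IH // refl_sm_tbar.
Qed.

Lemma refl_inv a v : dot a a != 0 -> refl a (refl a v) = v.
Proof.
move=> Hn; rewrite /refl dotBl dotZl.
move: (dot v a) (dot a a) Hn => d n Hn.
apply/rowP => j; rewrite !mxE; field; exact: Hn.
Qed.

Lemma word_inv s x : (forall a, a \in s -> dot a a != 0) ->
  word_act (rev s) (word_act s x) = x.
Proof.
elim: s x => //= a s IH x Hs.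
rewrite rev_cons -cats1 word_act_cat /= refl_inv; last by apply: Hs; rewrite inE eqxx.
by apply: IH => b Hb; apply: Hs; rewrite inE Hb orbT.
Qed.

Lemma sm_nz k : (k < 6)%nat -> dot (sm k) (sm k) != 0.
Proof. by move=> Hk; rewrite dot_sm //; case: k Hk => [|[|[|[|[|[|k]]]]]]. Qed.

Lemma word_d5_inv u x : d5ok u -> word_act (map sm (rev u)) (word_act (map sm u) x) = x.
Proof.
move=> Hu; rewrite map_rev word_inv // => a /mapP [k Hk ->].
apply: sm_nz; by move/allP: Hu => /(_ k Hk) /andP[].
Qed.

Lemma word_d5_inv' u x : d5ok u -> word_act (map sm u) (word_act (map sm (rev u)) x) = x.
Proof.
move=> Hu; have := word_d5_inv (rev u) x; rewrite revK; apply.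
by rewrite /d5ok all_rev.
Qed.

Lemma inWD5_word u : d5ok u -> inWD5 (word_act (map sm u)).
Proof.
move=> Hu; exists (map sm u); split => // a /mapP [k Hk ->].
move/allP: Hu => /(_ k Hk) /andP[H0 H6].
exists (Ordinal H6); split => //; by rewrite simple_sm.
Qed.

Lemma inWD5_tbar w : inWD5 w -> w tbar = tbar.
Proof.
move=> [s [Hs ->]]; elim: s Hs => //= a s IH Hs.
rewrite IH; last by move=> b Hb; apply: Hs; rewrite inE Hb orbT.
have [i [Hi ->]] := Hs a (mem_head _ _).
rewrite simple_sm refl_sm_tbar //; by rewrite Hi ltn_ord.
Qed.

Definition rf (f : nat -> Z) : vec := \row_(j < 8) (zr (f j) / 6).
Definition mk8 (f : nat -> Z) : seq Z := [:: f 0%nat; f 1%nat; f 2%nat; f 3%nat; f 4%nat; f 5%nat; f 6%nat; f 7%nat].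

Lemma rf_r6 f : rf f = r6 (mk8 f).
Proof. by apply/rowP; case => [[|[|[|[|[|[|[|[|?]]]]]]]] ?] //; rewrite !mxE. Qed.

Lemma rfD f g : rf f + rf g = rf (fun k => f k + g k)%Z.
Proof. apply/rowP => j; rewrite !mxE zrD; by field. Qed.
Lemma rfN f : - rf f = rf (fun k => - f k)%Z.
Proof. apply/rowP => j; rewrite !mxE zrN; by field. Qed.
Lemma rfZ c f : zr c *: rf f = rf (fun k => c * f k)%Z.
Proof. apply/rowP => j; rewrite !mxE zrM; by field. Qed.

Definition fe (i : nat) (k : nat) : Z := if k == i.-1 then Zpos 6 else Z0.
Lemma e_rf i : e i = rf (fe i).
Proof.
apply/rowP => j; rewrite !mxE /fe; case: (_ == _) => /=; ratc.
Qed.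

Open Scope Z_scope.
Definition ent6 (r : seq Z) (j : nat) : Z :=
  cnth r 0 * cnth (smtab 0) j + cnth r 1 * cnth (smtab 1) j + cnth r 2 * cnth (smtab 2) j +
  cnth r 3 * cnth (smtab 3) j + cnth r 4 * cnth (smtab 4) j + cnth r 5 * cnth (smtab 5) j.
Close Scope Z_scope.

Lemma embed_rf r : embed r = rf (ent6 r).
Proof.
rewrite embedE /embed_def !sm_r6 //; apply/rowP => j; rewrite !mxE /ent6 !zrD !zrM.
by field.
Qed.

Lemma zseq_eqbP u v : zseq_eqb u v -> u = v.
Proof.
elim: u v => [|a u IH] [|b v] //= /andP[/Z.eqb_eq -> /IH ->] //.
Qed.

Lemma rf_root f : has (fun r => zseq_eqb (mk8 (ent6 r)) (mk8 f)) RL ->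
  exists2 r, r \in RL & rf f = embed r.
Proof.
move/hasP=> [r Hr /zseq_eqbP E]; exists r => //.
by rewrite embed_rf !rf_r6 E.
Qed.

Lemma rfB f g : rf f - rf g = rf (fun k => f k + - g k)%Z.
Proof. by rewrite rfN rfD. Qed.

Lemma isRoot_case1 a : (exists i j : nat, [/\ (1 <= i)%nat, (i < j)%nat & (j <= 5)%nat] /\
     (a = e i + e j \/ a = - (e i + e j) \/ a = e i - e j \/ a = - (e i - e j))) ->
  exists2 r, r \in RL & a = embed r.
Proof.
move=> [i [j [[Hi Hij Hj] H]]].
case: H => [->|[->|[->|->]]]; rewrite !e_rf ?rfB ?rfD ?rfN; apply: rf_root;
move: Hi Hij Hj; case: i => [|[|[|[|[|[|i]]]]]]; case: j => [|[|[|[|[|[|j]]]]]] => //=;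
  vm_compute; reflexivity.
Qed.

Lemma zrm3 : zr (Zneg 3) = -3. Proof. by []. Qed.
Lemma zr3 : zr (Zpos 3) = 3. Proof. by []. Qed.
Definition zm3 (x : Z) : Z := Z.mul (Zpos 3) x.
Arguments zm3 : simpl never.
Lemma zr_zm3 x : zr (zm3 x) = 3 * zr x. Proof. by rewrite /zm3 zrM. Qed.
Definition bfun (s : nat -> Z) (j : nat) : Z :=
  match j with 0 | 1 | 2 | 3 | 4 => zm3 (s j) | 5 | 6 => Zneg 3 | _ => Zpos 3 end.

Lemma case2_ent (mu : 'I_5 -> rat) (s : nat -> Z) : (forall k : 'I_5, mu k = zr (s k)) ->
  (1/2) *: (\sum_(k < 5) mu k *: e k.+1 + e 8 - e 7 - e 6) = rf (bfun s).
Proof.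
move=> Hmu; rewrite !big_ord_recr big_ord0 /= !Hmu.
apply/rowP; case => [[|[|[|[|[|[|[|[|?]]]]]]]] ?] //; rewrite !mxE /= ?zr_zm3 ?zr3 ?zrm3; by field.
Qed.

Lemma isRoot_case2 a : (exists mu : 'I_5 -> rat,
     (forall k, mu k = 1 \/ mu k = -1) /\ \prod_(k < 5) mu k = 1 /\
     let b := (1/2) *: (\sum_(k < 5) mu k *: e k.+1 + e 8 - e 7 - e 6) in
     (a = b \/ a = - b)) -> exists2 r, r \in RL & a = embed r.
Proof.
move=> [mu [Hm [Hp Hab]]].
pose s (k : nat) : Z := if mu (inord k) == 1 then Zpos 1 else Zneg 1.
have Hmu : forall k : 'I_5, mu k = zr (s k).
  move=> k; rewrite /s inord_val; case: (Hm k) => ->; first by rewrite eqxx.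
  by [].
have Hs : forall k, s k = Zpos 1 \/ s k = Zneg 1.
  by move=> k; rewrite /s; case: ifP; auto.
have Hprod : (s 0%nat * s 1%nat * s 2%nat * s 3%nat * s 4%nat = Zpos 1)%Z.
  apply: zr_inj; rewrite !zrM zr1 -Hp !big_ord_recr big_ord0 /= !Hmu mul1r //.
have Hab' : a = (1/2) *: (\sum_(k < 5) mu k *: e k.+1 + e 8 - e 7 - e 6) \/
            a = - ((1/2) *: (\sum_(k < 5) mu k *: e k.+1 + e 8 - e 7 - e 6)) := Hab.
rewrite (@case2_ent mu s Hmu) in Hab'.
have rf_root' : forall f l, mk8 f = l -> has (fun r => zseq_eqb (mk8 (ent6 r)) l) RL ->
    exists2 r, r \in RL & rf f = embed r.
  by move=> f l <-; apply: rf_root.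
case: Hab' => ->; rewrite ?rfN.
  apply: (rf_root' _ [:: zm3 (s 0%nat); zm3 (s 1%nat); zm3 (s 2%nat); zm3 (s 3%nat); zm3 (s 4%nat);
     Zneg 3; Zneg 3; Zpos 3]); first by [].
  move: Hprod;
  case: (Hs 0%nat) => ->; case: (Hs 1%nat) => ->; case: (Hs 2%nat) => ->;
  case: (Hs 3%nat) => ->; case: (Hs 4%nat) => -> /= Hp'; first [discriminate | by vm_compute].
apply: (rf_root' _ [:: Z.opp (zm3 (s 0%nat)); Z.opp (zm3 (s 1%nat)); Z.opp (zm3 (s 2%nat));
   Z.opp (zm3 (s 3%nat)); Z.opp (zm3 (s 4%nat)); Zpos 3; Zpos 3; Zneg 3]); first by [].
move: Hprod;
  case: (Hs 0%nat) => ->; case: (Hs 1%nat) => ->; case: (Hs 2%nat) => ->;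
  case: (Hs 3%nat) => ->; case: (Hs 4%nat) => -> /= Hp'; first [discriminate | by vm_compute].
Qed.

Lemma root_embed a : isRoot a -> exists2 r, r \in RL & a = embed r.
Proof. by case; [apply: isRoot_case1 | apply: isRoot_case2]. Qed.

Lemma isRoot_neg a : isRoot a -> isRoot (- a).
Proof.
case=> [[i [j [H1 H]]]|[mu [H1 [H2 H]]]].
  left; exists i, j; split => //.
  by case: H => [->|[->|[->|->]]]; rewrite ?opprK; tauto.
right; exists mu; split => //; split => //=.
by case: H => ->; rewrite ?opprK; tauto.
Qed.

Arguments cdk : simpl never.
Arguments cdot : simpl never.
Arguments cnth : simpl never.

Lemma in_H2D u v : in_H2 u -> in_H2 v -> in_H2 (u + v).
Proof.
move=> [c <-] [d <-]; exists (fun i => c i + d i).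
rewrite /vec_of -big_split /=; apply: eq_bigr => i _; by rewrite intrD scalerDl.
Qed.

Lemma in_H2Z (z : int) v : in_H2 v -> in_H2 (z%:~R *: v).
Proof.
move=> [c <-]; exists (fun i => z * c i).
rewrite /vec_of scaler_sumr; apply: eq_bigr => i _; by rewrite intrM scalerA.
Qed.

Definition h2tab (k : nat) : seq int :=
  match k with
  | 0%nat => [:: 2; 1; 1; 1; 1; -3]
  | 1%nat => [:: 0; 0; -1; -1; -1; 2]
  | 2%nat => [:: -1; 1; 0; 0; 0; 0]
  | 3%nat => [:: 0; -1; 1; 0; 0; 0]
  | 4%nat => [:: 0; 0; -1; 1; 0; 0]
  | _ => [:: 0; 0; 0; -1; 1; 0] end.

Lemma in_H2_sm k : (k < 6)%nat -> in_H2 (sm k).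
Proof.
move=> Hk; exists (fun i : 'I_6 => nth 0 (h2tab k) i).
rewrite smE /vec_of !big_ord_recr big_ord0 /=.
(case: k Hk => [|[|[|[|[|[|k]]]]]] //= _; rewrite /alpha1 /t /xgen /u0; vec6).
Qed.

Lemma in_H2_embed r : in_H2 (embed r).
Proof.
rewrite embedE /embed_def.
by repeat apply: in_H2D; apply: in_H2Z; apply: in_H2_sm.
Qed.

Lemma label_neg a p : label a p -> label (- a) p.
Proof.
move=> [c [Hc [r ->]]]; exists (fun i => - c i); split.
  rewrite -Hc /vec_of -sumrN; apply: eq_bigr => i _; by rewrite intrN scaleNr.
exists (- r).
have -> : h2 (fun i => - c i) = - h2 c.
  rewrite /h2 -sumrN; apply: eq_bigr => i _; by rewrite mpolyCN mulNr.
by rewrite mulrNN.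
Qed.

Lemma zr_nat z : (0 <= z)%Z -> (Z.to_nat z)%:R = zr z.
Proof. by case: z. Qed.

Lemma ok_roots_all : all (fun r => [&& Z.eqb (cdot r r) (Zpos 2), size r == 6%nat &
   all (fun x => Z.leb Z0 x) r || all (fun x => Z.leb x Z0) r]) RL.
Proof. by have := ok_roots; rewrite /check_roots => /andP[/andP[/andP[/andP[/andP[]]]]]. Qed.

Lemma RL_normed r : r \in RL -> cdot r r = Zpos 2.
Proof. by move=> Hr; move/allP: ok_roots_all => /(_ r Hr) /and3P[/Z.eqb_eq]. Qed.

Lemma WR_RL p : all (fun r => r \in RL) (nth [::] WR p).
Proof.
have := ok_roots; rewrite /check_roots => /andP[/andP[/andP[/andP[/andP[_ H] _] _] _] _].
case: (ltnP p (size WR)) => Hp; first by move/allP: H; apply; rewrite mem_nth.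
by rewrite nth_default.
Qed.

Lemma WR0 : nth [::] WR 0 = [::].
Proof. by []. Qed.

Lemma pos_coeffs r : r \in RL -> exists c : 'I_6 -> nat,
  embed r = \sum_(i < 6) (c i)%:R *: simple i \/ - embed r = \sum_(i < 6) (c i)%:R *: simple i.
Proof.
move=> Hr; move/allP: ok_roots_all => /(_ r Hr) /and3P[_ /eqP Hs /orP[Hn|Hn]].
- exists (fun i => Z.to_nat (cnth r i)); left.
  have H : forall i, (i < 6)%nat -> (Z0 <= cnth r i)%Z.
    by move=> i Hi; move/allP: Hn => /(_ (cnth r i)) /(_ (mem_nth _ _)) /Z.leb_le; apply; rewrite Hs.
  rewrite !big_ord_recr big_ord0 !simple_sm /= !zr_nat; try by apply: H.
  by rewrite embedE /embed_def add0r.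
- exists (fun i => Z.to_nat (Z.opp (cnth r i))); right.
  have H : forall i, (i < 6)%nat -> (Z0 <= Z.opp (cnth r i))%Z.
    move=> i Hi; move/allP: Hn => /(_ (cnth r i)) /(_ (mem_nth _ _)) /Z.leb_le.
    by move=> H; have := H; rewrite Hs => /(_ Hi); lia.
  rewrite !big_ord_recr big_ord0 !simple_sm /= !zr_nat; try by apply: H.
  by rewrite !zrN embedE /embed_def add0r !opprD !scaleNr.
Qed.

Arguments cdk : simpl never.
Arguments cdot : simpl never.
Arguments cnth : simpl never.

Definition Wp (p : nat) : seq vec := map embed (nth [::] WR p).

Lemma normed_RL l : all (fun r => r \in RL) l -> all normed l.
Proof.
move/allP=> H; apply/allP => r Hr; rewrite /normed RL_normed //; exact: H.
Qed.

Lemma Wp_interp p x : word_act (Wp p) x = interp (cword (nth [::] WR p)) x.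
Proof. by rewrite word_interp // normed_RL // WR_RL. Qed.

Lemma lam_p p : word_act (Wp p) tbar = tbar + embed (op p).
Proof. by rewrite Wp_interp interp_tbar. Qed.

Lemma size_RL : size RL = 72%nat. Proof. by []. Qed.

Lemma zmat_eqbP u v : zmat_eqb u v -> u = v.
Proof.
elim: u v => [|a u IH] [|b v] //= /andP[/zseq_eqbP -> /IH ->] //.
Qed.

Lemma entry_ok p ri : (p < 27)%nat -> (ri < 72)%nat -> check_entry p ri.
Proof.
move=> Hp Hri; move: ok_tbl; rewrite /check_tbl => /allP /(_ p).
rewrite mem_iota add0n => /(_ Hp) /allP /(_ ri); rewrite mem_iota add0n; exact.
Qed.

Lemma map_sm_unit u : d5ok u -> map sm u = map embed (map unitv u).
Proof.
elim: u => //= k u IH /andP[Hk Hu]; by rewrite IH // embed_unit.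
Qed.

Lemma schreier p ri x : (p < 27)%nat -> (ri < 72)%nat ->
  refl (embed (nth [::] RL ri)) (word_act (Wp p) x) =
  word_act (Wp (tent p ri).1) (word_act (map sm (tent p ri).2) x).
Proof.
move=> Hp Hri; have := entry_ok _ _ Hp Hri; rewrite /check_entry.
move: (tent p ri) => [q u] /and5P[Hq Hu HE _ _].
have E := zmat_eqbP _ _ HE.
have Hr : nth [::] RL ri \in RL by rewrite mem_nth // size_RL.
have -> : refl (embed (nth [::] RL ri)) (word_act (Wp p) x) = word_act (map embed (nth [::] RL ri :: nth [::] WR p)) x by [].
rewrite word_interp; last by rewrite /= /normed RL_normed // normed_RL // WR_RL.
rewrite E -word_interp; last first.
  rewrite all_cat normed_RL ?WR_RL //=; apply/allP => v /mapP [k Hk ->].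
  by apply: unit_normed; move/allP: Hu => /(_ k Hk) /andP[].
by rewrite map_cat word_act_cat map_sm_unit.
Qed.

Lemma tent_ok p ri : (p < 27)%nat -> (ri < 72)%nat ->
  ((tent p ri).1 < 27)%nat /\ d5ok (tent p ri).2.
Proof.
move=> Hp Hri; have := entry_ok _ _ Hp Hri; rewrite /check_entry.
by case/and5P.
Qed.

Lemma root_idx r : r \in RL -> exists2 ri, (ri < 72)%nat & r = nth [::] RL ri.
Proof.
by move=> Hr; exists (index r RL); [rewrite -size_RL index_mem | rewrite nth_index].
Qed.

Lemma decomp s : (forall a, a \in s -> isRoot a) -> exists p u,
  [/\ (p < 27)%nat, d5ok u & forall x, word_act s x = word_act (Wp p) (word_act (map sm u) x)].
Proof.
elim: s => [|a s IH] Hs.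
  by exists 0%nat, [::]; split => // x; rewrite /Wp WR0.
have [p [u [Hp Hu Hx]]] := IH (fun b Hb => Hs b (mem_behead (s := a :: s) Hb)).
have [r Hr Ha] := root_embed _ (Hs a (mem_head _ _)).
have [ri Hri Er] := root_idx _ Hr.
have [Hq Hu'] := tent_ok _ _ Hp Hri.
exists (tent p ri).1, ((tent p ri).2 ++ u); split => //.
  by rewrite /d5ok all_cat; apply/andP; split.
move=> x /=; by rewrite Hx Ha Er schreier // map_cat word_act_cat.
Qed.

Lemma dot_lam o r : dot (tbar + embed o) (embed r) = zr (cnth r 0 + cdot o r)%Z.
Proof.
rewrite dotDl dot_embed dot_x_embed !dot_tb // /tb_d zrD; ring.
Qed.

Lemma refl_neg a v : refl (- a) v = refl a v.
Proof.
by rewrite /refl dotNr dotNl dotNr opprK mulrN mulNr scaleNr scalerN opprK.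
Qed.

Lemma inWD5_comp u w : d5ok u -> inWD5 w -> inWD5 (fun x => word_act (map sm u) (w x)).
Proof.
move=> Hu [sw [Hsw Ew]]; exists (map sm u ++ sw); split.
  move=> a; rewrite mem_cat => /orP[/mapP [k Hk ->]|]; last exact: Hsw.
  move/allP: Hu => /(_ k Hk) /andP[H0 H6].
  by exists (Ordinal H6); split => //; rewrite simple_sm.
by move=> v; rewrite word_act_cat Ew.
Qed.

Lemma inWD5_id : inWD5 id.
Proof. by exists [::]. Qed.

Lemma d5ok_rev u : d5ok u -> d5ok (rev u).
Proof. by rewrite /d5ok all_rev. Qed.

Lemma d5ok_cat u v : d5ok u -> d5ok v -> d5ok (u ++ v).
Proof. by rewrite /d5ok all_cat => -> ->. Qed.

Lemma zr_nz r : r \in RL -> embed r != 0.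
Proof.
move=> Hr; apply/eqP => E.
by have := dot_embed r r; rewrite E dot0l RL_normed // zr2 => /eqP.
Qed.

Arguments cdk : simpl never.
Arguments cdot : simpl never.
Arguments cnth : simpl never.

Lemma edge_ana p u0 p' u0' (rho rho' : endo) beta :
  (p < 27)%nat -> d5ok u0 -> (forall x, rho x = word_act (Wp p) (word_act (map sm u0) x)) ->
  (p' < 27)%nat -> d5ok u0' -> (forall x, rho' x = word_act (Wp p') (word_act (map sm u0') x)) ->
  gkm_edge rho rho' beta ->
  rho tbar - rho' tbar = beta \/ rho tbar - rho' tbar = - beta.
Proof.
move=> Hp Hu0 Erho Hp' Hu0' Erho' [Hns [[Hroot _] [w [Hw Hw']]]].
have [r Hr Eb] := root_embed _ Hroot.
have [ri Hri Er] := root_idx _ Hr.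
have El : rho tbar = tbar + embed (op p) by rewrite Erho word_d5_tbar // lam_p.
have El' : rho' tbar = refl beta (rho tbar) by rewrite Hw' inWD5_tbar.
have := entry_ok _ _ Hp Hri; rewrite /check_entry => /and5P[_ Hu' _ Hc0 Hc].
rewrite El' Eb refl_embed ?RL_normed // El dot_lam.
have -> : tbar + embed (op p) - (tbar + embed (op p) - zr (cnth r 0 + cdot (op p) r) *: embed r)
  = zr (cnth r 0 + cdot (op p) r) *: embed r.
  by rewrite opprB addrC subrK.
move: Hc0 Hc; rewrite -Er; move: (cnth r 0 + cdot (op p) r)%Z => c Hc0 /or3P[/Z.eqb_eq Ec|/Z.eqb_eq Ec|/Z.eqb_eq Ec];
  rewrite Ec.
- exfalso; apply: Hns.
  move: Hc0; rewrite Ec /= => /eqP Eq.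
  exists (fun x => word_act (map sm (rev u0 ++ (tent p ri).2 ++ u0)) (w x)); split.
    apply: inWD5_comp => //; by apply: d5ok_cat; [apply: d5ok_rev|apply: d5ok_cat].
  move=> x; rewrite Hw' !Erho Eb Er schreier // Eq !map_cat !word_act_cat.
  by rewrite word_d5_inv'.
- by left; rewrite zr1 scale1r.
- by right; rewrite zrm1 scaleN1r.
Qed.

Lemma in_H2_neg v : in_H2 v -> in_H2 (- v).
Proof.
move=> [c <-]; exists (fun i => - c i).
rewrite /vec_of -sumrN; apply: eq_bigr => i _; by rewrite intrN scaleNr.
Qed.

Lemma zseq6 (f g : nat -> Z) : (forall k, (k < 6)%nat -> f k = g k) -> zseq_eqb (mk6 f) (mk6 g).
Proof. by move=> H; rewrite /= !H // !Z.eqb_refl. Qed.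

Lemma cnth_mk6 (f : nat -> Z) k : (k < 6)%nat -> cnth (mk6 f) k = f k.
Proof. by case: k => [|[|[|[|[|[|k]]]]]]. Qed.

Theorem proposition4p1 :
  forall (lam lam' : vec) (rho rho' : endo),
    inLambda lam -> inLambda lam' ->
    inWE6 rho -> rho tbar = lam ->
    inWE6 rho' -> rho' tbar = lam' ->
    (gkm_adjacent rho rho' <-> exists alpha, isRoot alpha /\ lam - lam' = alpha) /\
    (forall alpha beta : vec,
       isRoot alpha -> lam - lam' = alpha -> gkm_edge rho rho' beta ->
       in_H2 alpha /\ in_H2 beta /\
       (forall p : HBT, label beta p <-> label alpha p)).
Proof.
move=> lam lam' rho rho' _ _ [s [Hs Es]] Hl [s' [Hs' Es']] Hl'.
have [p [u0 [Hp Hu0 Hd]]] := decomp _ Hs.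
have [p' [u0' [Hp' Hu0' Hd']]] := decomp _ Hs'.
have Erho : forall x, rho x = word_act (Wp p) (word_act (map sm u0) x) by move=> x; rewrite Es Hd.
have Erho' : forall x, rho' x = word_act (Wp p') (word_act (map sm u0') x) by move=> x; rewrite Es' Hd'.
have El : lam = tbar + embed (op p) by rewrite -Hl Erho word_d5_tbar // lam_p.
have El' : lam' = tbar + embed (op p') by rewrite -Hl' Erho' word_d5_tbar // lam_p.
have Eana := fun beta => edge_ana p u0 p' u0' rho rho' beta Hp Hu0 Erho Hp' Hu0' Erho'.
split.
- split.
  + move=> [beta Hedge].
    have Hroot : isRoot beta by case: Hedge => _ [[]].
    exists (lam - lam'); split => //.
    by case: (Eana beta Hedge) => E; rewrite -Hl -Hl' E //; apply: isRoot_neg.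
  + move=> [alpha [Hroot Hdiff]].
    have [r Hr Ea] := root_embed _ Hroot.
    have [ri Hri Er] := root_idx _ Hr.
    have Hk : forall k, (k < 6)%nat -> Z.sub (cdk (op p) k) (cdk (op p') k) = cdk r k.
      move=> k Hk; apply: zr_inj; rewrite /Z.sub zrD zrN -!dot_embed_sm // -dotBl.
      congr (dot _ (sm k)).
      by rewrite -Ea -Hdiff El El' opprD addrACA subrr add0r.
    have Eq : (tent p ri).1 = p'.
      move: ok_c4; rewrite /check_c4 => /allP /(_ p); rewrite mem_iota add0n => /(_ Hp).
      move=> /allP /(_ p'); rewrite mem_iota add0n => /(_ Hp').
      move=> /allP /(_ ri); rewrite mem_iota add0n => /(_ Hri) /implyP H.
      apply/eqP; apply: H; rewrite -Er /cdkv; apply: zseq6 => k Hk'.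
      by rewrite !cnth_mk6 // Hk.
    have Hgood : forall beta, isPosRoot beta -> (forall v, refl beta v = refl (embed r) v) ->
        gkm_adjacent rho rho'.
      move=> beta Hpos Hrefl; exists beta; split; last split => //.
        move=> [w [Hw Hw']].
        have E : lam' = lam by rewrite -Hl -Hl' Hw' inWD5_tbar.
        move: Hdiff; rewrite E subrr Ea => /esym /eqP; apply/negP; exact: zr_nz.
      have [Hq Hu'] := tent_ok _ _ Hp Hri.
      exists (fun x => word_act (map sm (rev u0 ++ rev (tent p ri).2 ++ u0')) (id x)); split.
        apply: inWD5_comp; last exact: inWD5_id.
        by apply: d5ok_cat; [apply: d5ok_rev|apply: d5ok_cat; [apply: d5ok_rev|]].
      move=> x; rewrite Hrefl Erho Erho' !map_cat !word_act_cat /= word_d5_inv' //.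
      by rewrite Er schreier // Eq word_d5_inv'.
    have [c Ec] := pos_coeffs _ Hr.
    case: Ec => Ec.
      by apply: (Hgood (embed r)) => //; split; [rewrite -Ea | exists c].
    apply: (Hgood (- embed r)); last by move=> v; rewrite refl_neg.
    by split; [rewrite -Ea; apply: isRoot_neg | exists c].
- move=> alpha beta Hroot Hdiff Hedge.
  have Hb : isRoot beta by case: Hedge => _ [[]].
  have [r Hr Eb] := root_embed _ Hb.
  have Hin : in_H2 beta by rewrite Eb; apply: in_H2_embed.
  case: (Eana beta Hedge) => E.
    have Ea : alpha = beta by rewrite -Hdiff -Hl -Hl' E.
    by rewrite Ea; split.
  have Ea : alpha = - beta by rewrite -Hdiff -Hl -Hl' E.
  rewrite Ea; split; first exact: in_H2_neg.
  split => // q; split; first exact: label_neg.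
  by move/label_neg; rewrite opprK.
Qed.
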